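(* Let $\mathcal H$ be a separable complex Hilbert space with canonical orthonormal basis $\{e_n\}$ and $S_2$ the Hilbert–Schmidt operators with $\langle\eta,\tau\rangle_2=\operatorname{tr}(\eta^*\tau)$. For a non-negative operator $A\in\mathcal B(S_2)$ there exists a family of selfadjoint operators $\{a_{nm}\}_{n,m\in\mathbb N}\subset\mathcal B(\mathcal H)$ such that $$A\eta=\sum_{n,m}\hat\varepsilon_{nm}\eta\,a_{nm},\qquad \eta\in S_2,$$ where $a_{nn}\ge0$ for all $n$. Moreover, the $a_{nn}$ are positive (resp. positive definite) if $A$ is positive (resp. positive definite), with greatest lower bounds $m_{a_{nn}}\ge m_A$ for all $n\in\mathbb N$.
   Context: $\varepsilon_{nm}=|e_n\rangle\langle e_m|$ (so $\varepsilon_{nm}f=\langle e_m,f\rangle e_n$) and $\hat\varepsilon_{nm}=\frac{1+i}{2}\varepsilon_{nm}+\frac{1-i}{2}\varepsilon_{mn}$ (selfadjoint; $\hat\varepsilon_{nn}=\varepsilon_{nn}$). Inner products are anti-linear in the left argument. For a selfadjoint bounded operator $T$ on a Hilbert space, $m_T=\inf\{\langle x,Tx\rangle:\|x\|=1\}$ is its greatest lower bound; $T\ge0$ if $\langle x,Tx\rangle\ge 0$ for all $x$, positive if $\langle x,Tx\rangle>0$ for $x\ne0$, positive definite if $m_T>0$. *)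

(* Defs.v *)
From Stdlib Require Import Reals Arith.
From Coquelicot Require Import Coquelicot.
Open Scope R_scope.

(** The separable Hilbert space H is modelled as l^2(N; C): vectors are
    sequences nat -> C, the l^2 ones are those with square-summable modulus. Inner product anti-linear on the left. *)
Definition vec := nat -> C.
Definition op := vec -> vec.

Definition vadd (x y : vec) : vec := fun k => Cplus (x k) (y k).
Definition vscal (c : C) (x : vec) : vec := fun k => Cmult c (x k).
Definition vsub (x y : vec) : vec := fun k => Cminus (x k) (y k).
Definition vzero : vec := fun _ => RtoC 0.
Definition veq (x y : vec) : Prop := forall k, x k = y k.
Definition e (n : nat) : vec := fun k => if Nat.eqb k n then RtoC 1 else RtoC 0.

Definition l2 (x : vec) : Prop := ex_series (fun k => (Cmod (x k)) ^ 2).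
Definition nsq (x : vec) : R := Series (fun k => (Cmod (x k)) ^ 2).
Definition ip (x y : vec) : C :=
  (Series (fun k => Re (Cmult (Cconj (x k)) (y k))),
   Series (fun k => Im (Cmult (Cconj (x k)) (y k)))).

Definition bounded_lin {V : Type} (mem : V -> Prop) (eqv : V -> V -> Prop)
  (add : V -> V -> V) (scal : C -> V -> V) (nr : V -> R) (T : V -> V) : Prop :=
  (forall x, mem x -> mem (T x)) /\
  (forall x y, mem x -> mem y -> eqv x y -> eqv (T x) (T y)) /\
  (forall x y, mem x -> mem y -> eqv (T (add x y)) (add (T x) (T y))) /\
  (forall c x, mem x -> eqv (T (scal c x)) (scal c (T x))) /\
  (exists M, forall x, mem x -> nr (T x) <= M * nr x).

Definition is_nonneg {V : Type} (mem : V -> Prop) (ipV : V -> V -> C) (T : V -> V) : Prop :=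
  forall x, mem x -> Im (ipV x (T x)) = 0 /\ 0 <= Re (ipV x (T x)).

Definition is_positive {V : Type} (mem : V -> Prop) (eqv : V -> V -> Prop) (zero : V)
  (ipV : V -> V -> C) (T : V -> V) : Prop :=
  is_nonneg mem ipV T /\ forall x, mem x -> ~ eqv x zero -> 0 < Re (ipV x (T x)).

Definition qf_vals {V : Type} (mem : V -> Prop) (nr : V -> R) (ipV : V -> V -> C)
  (T : V -> V) (r : R) : Prop :=
  exists x, mem x /\ nr x = 1 /\ r = Re (ipV x (T x)).

Definition is_glb (E : R -> Prop) (m : R) : Prop :=
  (forall r, E r -> m <= r) /\ (forall m', (forall r, E r -> m' <= r) -> m' <= m).

Definition posdef {V : Type} (mem : V -> Prop) (nr : V -> R) (ipV : V -> V -> C)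
  (T : V -> V) : Prop :=
  exists m, is_glb (qf_vals mem nr ipV T) m /\ 0 < m.

Definition Hbounded (T : op) : Prop := bounded_lin l2 veq vadd vscal nsq T.
Definition selfadjointH (T : op) : Prop :=
  Hbounded T /\ forall x y, l2 x -> l2 y -> ip x (T y) = ip (T x) y.

Definition op_eq (S T : op) : Prop := forall x, l2 x -> veq (S x) (T x).
Definition op_add (S T : op) : op := fun x => vadd (S x) (T x).
Definition op_scal (c : C) (S : op) : op := fun x => vscal c (S x).
Definition op_sub (S T : op) : op := fun x => vsub (S x) (T x).
Definition op_zero : op := fun _ => vzero.

Definition HS (eta : op) : Prop :=
  Hbounded eta /\ ex_series (fun n => nsq (eta (e n))).
Definition hs_nsq (eta : op) : R := Series (fun n => nsq (eta (e n))).
(** <eta, tau>_2 = tr(eta^* tau) = sum_n <eta e_n, tau e_n> *)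
Definition ip2 (eta tau : op) : C :=
  (Series (fun n => Re (ip (eta (e n)) (tau (e n)))),
   Series (fun n => Im (ip (eta (e n)) (tau (e n))))).

Definition S2bounded (A : op -> op) : Prop :=
  bounded_lin HS op_eq op_add op_scal hs_nsq A.

(** eps_nm f = <e_m, f> e_n ;  epshat_nm = (1+i)/2 eps_nm + (1-i)/2 eps_mn *)
Definition eps (n m : nat) (f : vec) : vec := vscal (ip (e m) f) (e n).
Definition epshat (n m : nat) (f : vec) : vec :=
  vadd (vscal ((1/2)%R, (1/2)%R) (eps n m f)) (vscal ((1/2)%R, (-(1/2))%R) (eps m n f)).

Fixpoint vsum (N : nat) (f : nat -> vec) : vec :=
  match N with
  | O => vzero
  | S N' => vadd (vsum N' f) (f N')
  end.

Definition sq_partial (a : nat -> nat -> op) (eta : op) (N : nat) : op :=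
  fun x => vsum N (fun n => vsum N (fun m => epshat n m (eta (a n m x)))).

(* Main.v *)
Require Import Defs.
From Stdlib Require Import Reals Arith Lra Lia Psatz FunctionalExtensionality.
From Coquelicot Require Import Coquelicot.
Open Scope R_scope.


Fixpoint rsum (N : nat) (f : nat -> R) : R :=
  match N with O => 0 | S N' => rsum N' f + f N' end.

Definition rconv (a : nat -> R) (l : R) : Prop :=
  forall eps, 0 < eps -> exists N, forall n, (N <= n)%nat -> Rabs (rsum n a - l) < eps.

Lemma sum_n_rsum a n : sum_n a n = rsum (S n) a.
Proof.
  induction n.
  - rewrite sum_O. simpl. rewrite Rplus_0_l. reflexivity.
  - rewrite sum_Sn, IHn. simpl. unfold plus. simpl. reflexivity.
Qed.

Lemma is_series_rconv a l : is_series a l -> rconv a l.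
Proof.
  intros H eps Heps.
  destruct (H _ (locally_ball l (mkposreal eps Heps))) as [N HN].
  exists (S N). intros n Hn. destruct n as [|n]; [lia|].
  specialize (HN n ltac:(lia)). rewrite sum_n_rsum in HN.
  exact HN.
Qed.

Lemma rconv_is_series a l : rconv a l -> is_series a l.
Proof.
  intros H P [eps HP].
  destruct (H eps (cond_pos eps)) as [N HN].
  exists N. intros n Hn. apply HP. rewrite sum_n_rsum.
  apply HN. lia.
Qed.

Lemma rconv_Series a l : rconv a l -> ex_series a /\ Series a = l.
Proof.
  intros H. apply rconv_is_series in H. split.
  - exists l; auto.
  - apply is_series_unique; auto.
Qed.

Lemma Series_rconv a : ex_series a -> rconv a (Series a).
Proof. intros H. apply is_series_rconv, Series_correct, H. Qed.

Lemma rconv_unique a l m : rconv a l -> rconv a m -> l = m.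
Proof.
  intros H1 H2. apply rconv_Series in H1. apply rconv_Series in H2.
  destruct H1 as [_ H1], H2 as [_ H2]. congruence.
Qed.

Lemma rsum_plus n a b : rsum n (fun k => a k + b k) = rsum n a + rsum n b.
Proof. induction n; simpl; [ring|rewrite IHn; ring]. Qed.
Lemma rsum_scal n c a : rsum n (fun k => c * a k) = c * rsum n a.
Proof. induction n; simpl; [ring|rewrite IHn; ring]. Qed.
Lemma rsum_ext n a b : (forall k, (k < n)%nat -> a k = b k) -> rsum n a = rsum n b.
Proof. induction n; intros H; simpl; auto. rewrite IHn, H; auto. Qed.
Lemma rsum_le n a b : (forall k, (k < n)%nat -> a k <= b k) -> rsum n a <= rsum n b.
Proof. induction n; intros H; simpl; [lra|]. 
  assert (rsum n a <= rsum n b) by (apply IHn; auto). specialize (H n ltac:(lia)). lra. Qed.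
Lemma rsum_nonneg n a : (forall k, 0 <= a k) -> 0 <= rsum n a.
Proof. intros H; induction n; simpl; [lra|]. specialize (H n). lra. Qed.
Lemma rsum_mono n m a : (forall k, 0 <= a k) -> (n <= m)%nat -> rsum n a <= rsum m a.
Proof. intros H Hnm. induction Hnm; [lra|]. simpl. specialize (H m). lra. Qed.

Lemma rconv_plus a b l m : rconv a l -> rconv b m -> rconv (fun k => a k + b k) (l + m).
Proof.
  intros H1 H2 eps Heps.
  destruct (H1 (eps/2) ltac:(lra)) as [N1 HN1].
  destruct (H2 (eps/2) ltac:(lra)) as [N2 HN2].
  exists (max N1 N2). intros n Hn. rewrite rsum_plus.
  specialize (HN1 n ltac:(lia)). specialize (HN2 n ltac:(lia)).
  apply Rabs_def2 in HN1. apply Rabs_def2 in HN2. apply Rabs_def1; lra.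
Qed.

Lemma rconv_scal c a l : rconv a l -> rconv (fun k => c * a k) (c * l).
Proof.
  intros H eps Heps.
  destruct (H (eps / (Rabs c + 1))) as [N HN].
  { apply Rdiv_lt_0_compat; [lra|]. pose proof (Rabs_pos c). lra. }
  exists N. intros n Hn. rewrite rsum_scal.
  replace (c * rsum n a - c * l) with (c * (rsum n a - l)) by ring.
  rewrite Rabs_mult. specialize (HN n Hn).
  pose proof (Rabs_pos c). pose proof (Rabs_pos (rsum n a - l)).
  apply Rle_lt_trans with ((Rabs c + 1) * Rabs (rsum n a - l)); [nra|].
  replace eps with ((Rabs c + 1) * (eps / (Rabs c + 1))) by (field; lra).
  apply Rmult_lt_compat_l; lra.
Qed.

Lemma rconv_ext a b l : (forall k, a k = b k) -> rconv a l -> rconv b l.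
Proof.
  intros E H eps Heps. destruct (H eps Heps) as [N HN]. exists N. intros n Hn.
  rewrite <- (rsum_ext n a b); auto.
Qed.

Lemma rconv_le a b l m : rconv a l -> rconv b m -> (forall k, a k <= b k) -> l <= m.
Proof.
  intros H1 H2 H. apply Rnot_lt_le. intros Hlt.
  destruct (H1 ((l - m)/2) ltac:(lra)) as [N1 HN1].
  destruct (H2 ((l - m)/2) ltac:(lra)) as [N2 HN2].
  specialize (HN1 (max N1 N2) ltac:(lia)). specialize (HN2 (max N1 N2) ltac:(lia)).
  assert (rsum (max N1 N2) a <= rsum (max N1 N2) b) by (apply rsum_le; auto).
  apply Rabs_def2 in HN1. apply Rabs_def2 in HN2. lra.
Qed.

Lemma rconv_incr a B : (forall k, 0 <= a k) -> (forall n, rsum n a <= B) ->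
  exists l, rconv a l /\ l <= B.
Proof.
  intros Hpos HB.
  destruct (ex_finite_lim_seq_incr (fun n => rsum n a) B) as [l Hl].
  - intros n. simpl. specialize (Hpos n). lra.
  - auto.
  - exists l. split.
    + intros eps Heps. apply is_lim_seq_spec in Hl.
      destruct (Hl (mkposreal eps Heps)) as [N HN]. exists N. intros n Hn. apply HN. auto.
    + apply Rnot_lt_le. intros Hlt. apply is_lim_seq_spec in Hl.
      destruct (Hl (mkposreal (l - B) ltac:(lra))) as [N HN].
      specialize (HN N (le_n _)). simpl in HN. specialize (HB N).
      apply Rabs_def2 in HN. lra.
Qed.

Lemma ser_cmp a b : (forall k, 0 <= a k <= b k) -> ex_series b ->
  ex_series a /\ Series a <= Series b.
Proof.
  intros H Hb.
  destruct (rconv_incr a (Series b)) as [l [Hl Hlb]].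
  - intros k; apply H.
  - intros n. apply Rle_trans with (rsum n b).
    + apply rsum_le. intros; apply H.
    + apply Series_rconv in Hb.
      apply Rnot_lt_le. intros Hlt.
      destruct (Hb (rsum n b - Series b) ltac:(lra)) as [N HN].
      specialize (HN (max n N) ltac:(lia)).
      assert (rsum n b <= rsum (max n N) b) by (apply rsum_mono; [intros k; specialize (H k); lra| lia]).
      apply Rabs_def2 in HN. lra.
  - apply rconv_Series in Hl. destruct Hl as [Hl1 Hl2]. split; auto. lra.
Qed.

Lemma Series_nonneg a : (forall k, 0 <= a k) -> ex_series a -> 0 <= Series a.
Proof.
  intros H E. apply Series_rconv in E. apply (rconv_le (fun _ => 0) a); auto.
  intros eps Heps; exists O; intros n _.
  replace (rsum n (fun _ => 0)) with 0. rewrite Rminus_0_r, Rabs_R0; auto.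
  induction n; simpl; auto; lra.
Qed.


Lemma rconv_fin a K : (forall k, (K <= k)%nat -> a k = 0) -> rconv a (rsum K a).
Proof.
  intros H eps Heps. exists K. intros n Hn.
  replace (rsum n a) with (rsum K a). rewrite Rminus_diag, Rabs_R0; auto.
  induction Hn; auto. simpl. rewrite H by lia. rewrite IHHn. ring.
Qed.

Lemma rsum_single a p K : (forall k, k <> p -> a k = 0) -> rsum K a = if (p <? K)%nat then a p else 0.
Proof.
  intros H. induction K; simpl; auto.
  destruct (Nat.eq_dec p K) as [->|Hne].
  - rewrite (proj2 (Nat.ltb_ge K K)) in IHK by lia. rewrite (proj2 (Nat.ltb_lt K (S K))) by lia.
    rewrite IHK; ring.
  - rewrite H by auto. rewrite IHK, Rplus_0_r.
    destruct (p <? K)%nat eqn:E1; destruct (p <? S K)%nat eqn:E2; auto;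
    apply Nat.ltb_lt in E1 || apply Nat.ltb_ge in E1;
    apply Nat.ltb_lt in E2 || apply Nat.ltb_ge in E2; lia.
Qed.

Lemma rconv_single a p : (forall k, k <> p -> a k = 0) -> rconv a (a p).
Proof.
  intros H. replace (a p) with (rsum (S p) a).
  - apply rconv_fin. intros k Hk. apply H. lia.
  - rewrite (rsum_single a p) by auto. rewrite (proj2 (Nat.ltb_lt p (S p))) by lia. auto.
Qed.

Lemma Series_single a p : (forall k, k <> p -> a k = 0) -> Series a = a p.
Proof. intros H. apply rconv_Series, rconv_single, H. Qed.

Definition rtail (K : nat) (a : nat -> R) : nat -> R := fun k => if (k <? K)%nat then 0 else a k.
Definition rtrunc (K : nat) (a : nat -> R) : nat -> R := fun k => if (k <? K)%nat then a k else 0.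

Lemma rsum_rtrunc K a : rsum K (rtrunc K a) = rsum K a.
Proof. apply rsum_ext. intros k Hk. unfold rtrunc. rewrite (proj2 (Nat.ltb_lt k K)); auto. Qed.

Lemma rtail_conv K a l : rconv a l -> rconv (rtail K a) (l - rsum K a).
Proof.
  intros H.
  assert (H2 : rconv (rtrunc K a) (rsum K a)).
  { rewrite <- rsum_rtrunc. apply rconv_fin. intros k Hk. unfold rtrunc.
    rewrite (proj2 (Nat.ltb_ge k K)); auto. }
  apply (rconv_scal (-1)) in H2.
  pose proof (rconv_plus _ _ _ _ H H2) as H3.
  replace (l - rsum K a) with (l + -1 * rsum K a) by ring.
  apply (rconv_ext _ _ _ ) with (2 := H3). intros k. unfold rtail, rtrunc.
  destruct (k <? K)%nat; ring.
Qed.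

Lemma Series_split K a : ex_series a -> ex_series (rtail K a) /\ Series a = rsum K a + Series (rtail K a).
Proof.
  intros H. apply Series_rconv in H. apply (rtail_conv K) in H.
  apply rconv_Series in H. destruct H as [H1 H2]. split; auto. rewrite H2. ring.
Qed.

Lemma tail_small a : (forall k, 0 <= a k) -> ex_series a ->
  forall eps, 0 < eps -> exists N, forall K, (N <= K)%nat -> Series (rtail K a) < eps.
Proof.
  intros Hpos H eps Heps.
  pose proof (Series_rconv _ H) as Hc.
  destruct (Hc eps Heps) as [N HN]. exists N. intros K HK.
  destruct (Series_split K a H) as [_ E].
  specialize (HN K HK). apply Rabs_def2 in HN. lra.
Qed.

Lemma rtail_nonneg K a : (forall k, 0 <= a k) -> forall k, 0 <= rtail K a k.
Proof. intros H k; unfold rtail; destruct (k <? K)%nat; auto; lra. Qed.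

Lemma rsum_le_Series a n : (forall k, 0 <= a k) -> ex_series a -> rsum n a <= Series a.
Proof.
  intros Hpos H. destruct (Series_split n a H) as [H1 H2].
  pose proof (Series_nonneg (rtail n a) (rtail_nonneg n a Hpos) H1). lra.
Qed.

Lemma term_le_Series a p : (forall k, 0 <= a k) -> ex_series a -> a p <= Series a.
Proof.
  intros Hpos H. apply Rle_trans with (rsum (S p) a); [|apply rsum_le_Series; auto].
  simpl. pose proof (rsum_nonneg p a Hpos). lra.
Qed.

Lemma t_trick c A B : 0 <= A -> 0 <= B ->
  (forall t, 0 < t -> Rabs c <= (t * A + B / t) / 2) -> c * c <= A * B.
Proof.
  intros HA HB H. apply Rnot_lt_le. intros Hlt.
  assert (Hc : 0 < Rabs c).
  { destruct (Rcase_abs c); [rewrite Rabs_left; auto; lra|].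
    rewrite Rabs_right by lra. destruct (Req_dec c 0); [subst; nra|lra]. }
  assert (Hcc : Rabs c * Rabs c = c * c) by (rewrite <- Rabs_mult; apply Rabs_right; nra).
  destruct (Req_dec A 0) as [HA0|HA0].
  - subst A. specialize (H ((B + 1) / Rabs c) ltac:(apply Rdiv_lt_0_compat; lra)).
    rewrite Rmult_0_r, Rplus_0_l in H.
    replace (B / ((B + 1) / Rabs c)) with (B * Rabs c / (B + 1)) in H by (field; repeat split; intro; lra).
    assert (B * Rabs c / (B + 1) < Rabs c).
    { apply (Rmult_lt_reg_r (B + 1)); [lra|]. field_simplify; lra. }
    lra.
  - specialize (H (Rabs c / A) ltac:(apply Rdiv_lt_0_compat; lra)).
    replace (Rabs c / A * A + B / (Rabs c / A)) with (Rabs c + A * B / Rabs c) in H by (field; repeat split; intro; lra).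
    assert (Rabs c <= A * B / Rabs c) by lra.
    apply (Rmult_le_compat_r (Rabs c)) in H0; [|lra].
    replace (A * B / Rabs c * Rabs c) with (A * B) in H0 by (field; repeat split; intro; lra). lra.
Qed.

Lemma amgm t a b : 0 < t -> Rabs (a * b) <= (t * (a * a) + (b * b) / t) / 2.
Proof.
  intros Ht.
  assert (E1 : (t * (a * a) + (b * b) / t) / 2 - a * b = (t * a - b) * (t * a - b) / (2 * t)) by (field; repeat split; intro; lra).
  assert (E2 : (t * (a * a) + (b * b) / t) / 2 + a * b = (t * a + b) * (t * a + b) / (2 * t)) by (field; repeat split; intro; lra).
  assert (0 <= (t * a - b) * (t * a - b) / (2 * t)) by (unfold Rdiv; apply Rmult_le_pos; [apply Rle_0_sqr| apply Rlt_le, Rinv_0_lt_compat; lra]).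
  assert (0 <= (t * a + b) * (t * a + b) / (2 * t)) by (unfold Rdiv; apply Rmult_le_pos; [apply Rle_0_sqr| apply Rlt_le, Rinv_0_lt_compat; lra]).
  apply Rabs_le. lra.
Qed.


Lemma exR_plus a b : ex_series a -> ex_series b -> ex_series (fun k => a k + b k) /\ Series (fun k => a k + b k) = Series a + Series b.
Proof.
  intros Ha Hb. apply Series_rconv in Ha. apply Series_rconv in Hb.
  apply rconv_Series. apply rconv_plus; auto.
Qed.
Lemma exR_scal c a : ex_series a -> ex_series (fun k => c * a k) /\ Series (fun k => c * a k) = c * Series a.
Proof.
  intros Ha. apply Series_rconv in Ha. apply rconv_Series. apply rconv_scal; auto.
Qed.

Ltac ceq := apply injective_projections; simpl; field.

Definition sq (c : C) : R := fst c * fst c + snd c * snd c.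

Lemma sq_nonneg c : 0 <= sq c.
Proof. unfold sq. pose proof (Rle_0_sqr (fst c)). pose proof (Rle_0_sqr (snd c)). unfold Rsqr in *. lra. Qed.

Lemma Cmod_sq c : Cmod c ^ 2 = sq c.
Proof.
  unfold Cmod, sq. rewrite pow2_sqrt. ring.
  pose proof (Rle_0_sqr (fst c)). pose proof (Rle_0_sqr (snd c)). unfold Rsqr in *. nra.
Qed.

Lemma nsq_eq x : nsq x = Series (fun k => sq (x k)).
Proof. unfold nsq. apply Series_ext. intros; apply Cmod_sq. Qed.

Lemma l2_eq x : l2 x <-> ex_series (fun k => sq (x k)).
Proof. unfold l2. split; apply ex_series_ext; intros; rewrite Cmod_sq; auto. Qed.

Lemma sq_add a b : sq (Cplus a b) <= 2 * sq a + 2 * sq b.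
Proof.
  destruct a as [a1 a2], b as [b1 b2]; unfold sq; simpl.
  pose proof (Rle_0_sqr (a1 - b1)). pose proof (Rle_0_sqr (a2 - b2)). unfold Rsqr in *. nra.
Qed.

Lemma sq_minus a b : sq (Cminus a b) <= 2 * sq a + 2 * sq b.
Proof.
  destruct a as [a1 a2], b as [b1 b2]; unfold sq; simpl.
  pose proof (Rle_0_sqr (a1 + b1)). pose proof (Rle_0_sqr (a2 + b2)). unfold Rsqr in *. nra.
Qed.

Lemma sq_mult a b : sq (Cmult a b) = sq a * sq b.
Proof. destruct a as [a1 a2], b as [b1 b2]; unfold sq; simpl. ring. Qed.

Lemma sq_conj a : sq (Cconj a) = sq a.
Proof. destruct a as [a1 a2]; unfold sq; simpl. ring. Qed.

Lemma sq_zero a : sq a = 0 -> a = RtoC 0.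
Proof.
  destruct a as [a1 a2]; unfold sq; simpl. intros H.
  pose proof (Rle_0_sqr a1). pose proof (Rle_0_sqr a2). unfold Rsqr in *.
  assert (a1 * a1 = 0) by lra. assert (a2 * a2 = 0) by lra.
  apply Rmult_integral in H2. apply Rmult_integral in H3.
  unfold RtoC; f_equal; destruct H2, H3; lra.
Qed.

Lemma sq_0 : sq (RtoC 0) = 0.
Proof. unfold sq; simpl; ring. Qed.

Lemma Re_sq c : fst c * fst c <= sq c.
Proof. unfold sq. pose proof (Rle_0_sqr (snd c)). unfold Rsqr in *. lra. Qed.
Lemma Im_sq c : snd c * snd c <= sq c.
Proof. unfold sq. pose proof (Rle_0_sqr (fst c)). unfold Rsqr in *. lra. Qed.

Lemma abs_le_sq (r : R) c : r * r <= c -> 0 <= c.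
Proof. intros. pose proof (Rle_0_sqr r). unfold Rsqr in *. lra. Qed.

Lemma veq_eq x y : veq x y -> x = y.
Proof. intros H. apply functional_extensionality. exact H. Qed.

Lemma sqx_nonneg (x : vec) : forall k, 0 <= sq (x k).
Proof. intros; apply sq_nonneg. Qed.

Lemma nsq_nonneg x : l2 x -> 0 <= nsq x.
Proof. intros H. rewrite nsq_eq. apply Series_nonneg; [apply sqx_nonneg| apply l2_eq; auto]. Qed.

Lemma comp_le_nsq x p : l2 x -> sq (x p) <= nsq x.
Proof. intros H. rewrite nsq_eq. apply (term_le_Series (fun k => sq (x k))); [apply sqx_nonneg|apply l2_eq; auto]. Qed.

Lemma l2_vscal c x : l2 x -> l2 (vscal c x).
Proof.
  intros H. apply l2_eq. apply l2_eq in H. unfold vscal.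
  eapply ex_series_ext; [|apply (proj1 (exR_scal (sq c) _ H))].
  intros n. simpl. rewrite sq_mult. reflexivity.
Qed.

Lemma nsq_vscal c x : nsq (vscal c x) = sq c * nsq x.
Proof.
  rewrite !nsq_eq. unfold vscal. rewrite <- Series_scal_l. apply Series_ext. intros; apply sq_mult.
Qed.

Lemma l2_vadd x y : l2 x -> l2 y -> l2 (vadd x y) /\ nsq (vadd x y) <= 2 * nsq x + 2 * nsq y.
Proof.
  intros Hx Hy. apply l2_eq in Hx. apply l2_eq in Hy.
  assert (Hs : ex_series (fun k => 2 * sq (x k) + 2 * sq (y k))).
  { apply exR_plus; apply exR_scal; auto. }
  destruct (ser_cmp (fun k => sq (vadd x y k)) _ (fun k => conj (sq_nonneg _) (sq_add (x k) (y k))) Hs) as [H1 H2].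
  split; [apply l2_eq; auto|].
  rewrite !nsq_eq. eapply Rle_trans; [exact H2|].
  rewrite (proj2 (exR_plus _ _ (proj1 (exR_scal 2 _ Hx)) (proj1 (exR_scal 2 _ Hy)))).
  rewrite (proj2 (exR_scal 2 _ Hx)), (proj2 (exR_scal 2 _ Hy)). lra.
Qed.

Lemma l2_vsub x y : l2 x -> l2 y -> l2 (vsub x y) /\ nsq (vsub x y) <= 2 * nsq x + 2 * nsq y.
Proof.
  intros Hx Hy.
  replace (vsub x y) with (vadd x (vscal (RtoC (-1)) y)).
  - destruct (l2_vadd x (vscal (RtoC (-1)) y) Hx (l2_vscal _ _ Hy)) as [H1 H2].
    split; auto. rewrite nsq_vscal in H2. unfold sq in H2; simpl in H2. lra.
  - apply functional_extensionality; intros k; unfold vadd, vsub, vscal. ceq.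
Qed.

Lemma l2_e n : l2 (e n).
Proof.
  apply l2_eq. exists 1. apply rconv_is_series.
  replace 1 with (sq (e n n)).
  - apply (rconv_single (fun k => sq (e n k)) n). intros k Hk. unfold e. rewrite (proj2 (Nat.eqb_neq k n) Hk). apply sq_0.
  - unfold e. rewrite Nat.eqb_refl. unfold sq; simpl; ring.
Qed.

Lemma nsq_e n : nsq (e n) = 1.
Proof.
  rewrite nsq_eq. rewrite (Series_single _ n).
  - unfold e. rewrite Nat.eqb_refl. unfold sq; simpl; ring.
  - intros k Hk. unfold e. rewrite (proj2 (Nat.eqb_neq k n) Hk). apply sq_0.
Qed.

Lemma l2_vzero : l2 vzero.
Proof. apply l2_eq. exists 0. apply rconv_is_series. eapply rconv_ext; [|apply (rconv_fin (fun _ => 0) 0)].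
  - intros; unfold vzero; rewrite sq_0; auto.
  - auto. Qed.

Lemma nsq_vzero : nsq vzero = 0.
Proof. rewrite nsq_eq. unfold vzero. rewrite sq_0. apply (Series_single (fun _ => 0) 0). auto. Qed.

Lemma nsq_zero x : l2 x -> nsq x = 0 -> veq x vzero.
Proof.
  intros Hx H k. apply sq_zero. pose proof (comp_le_nsq x k Hx). pose proof (sq_nonneg (x k)). lra.
Qed.

Fixpoint csum (N : nat) (f : nat -> C) : C :=
  match N with O => RtoC 0 | S N' => Cplus (csum N' f) (f N') end.

Lemma vsum_comp N f p : vsum N f p = csum N (fun k => f k p).
Proof. induction N; simpl; auto. unfold vadd. rewrite IHN. auto. Qed.

Lemma csum_ext N f g : (forall k, (k < N)%nat -> f k = g k) -> csum N f = csum N g.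
Proof. induction N; intros H; simpl; auto. rewrite IHN, H; auto. Qed.

Lemma csum_plus N f g : csum N (fun k => Cplus (f k) (g k)) = Cplus (csum N f) (csum N g).
Proof. induction N; simpl. ceq. rewrite IHN. ceq. Qed.

Lemma csum_scal N c f : csum N (fun k => Cmult c (f k)) = Cmult c (csum N f).
Proof. induction N; simpl. ceq. rewrite IHN. ceq. Qed.

Lemma csum_single N f p : (forall k, k <> p -> f k = RtoC 0) -> csum N f = if (p <? N)%nat then f p else RtoC 0.
Proof.
  intros H. induction N; simpl; auto.
  destruct (Nat.eq_dec p N) as [->|Hne].
  - rewrite (proj2 (Nat.ltb_ge N N)) in IHN by lia. rewrite (proj2 (Nat.ltb_lt N (S N))) by lia.
    rewrite IHN; ceq.
  - rewrite (H N) by auto. rewrite IHN.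
    destruct (p <? N)%nat eqn:E1; destruct (p <? S N)%nat eqn:E2;
    apply Nat.ltb_lt in E1 || apply Nat.ltb_ge in E1;
    apply Nat.ltb_lt in E2 || apply Nat.ltb_ge in E2; try lia; ceq.
Qed.

Lemma csum_fst N f : fst (csum N f) = rsum N (fun k => fst (f k)).
Proof. induction N; simpl; auto. rewrite IHN; auto. Qed.
Lemma csum_snd N f : snd (csum N f) = rsum N (fun k => snd (f k)).
Proof. induction N; simpl; auto. rewrite IHN; auto. Qed.



Lemma exR_abs a b : (forall k, Rabs (a k) <= b k) -> ex_series b ->
  ex_series a /\ Rabs (Series a) <= Series b.
Proof.
  intros H Hb.
  assert (H1 : forall k, 0 <= a k + b k <= 2 * b k).
  { intros k; specialize (H k); apply Rabs_le_between in H || (pose proof (Rabs_def2b _ _ H)); 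
    pose proof (Rle_abs (a k)); pose proof (Rle_abs (- a k)); rewrite Rabs_Ropp in *; lra. }
  assert (H2 : forall k, 0 <= - a k + b k <= 2 * b k).
  { intros k; specialize (H k);
    pose proof (Rle_abs (a k)); pose proof (Rle_abs (- a k)); rewrite Rabs_Ropp in *; lra. }
  destruct (exR_scal 2 b Hb) as [Hb2 Eb2].
  destruct (ser_cmp _ _ H1 Hb2) as [E1 L1].
  destruct (ser_cmp _ _ H2 Hb2) as [E2 L2].
  destruct (exR_plus _ _ E1 (proj1 (exR_scal (-1) b Hb))) as [E3 S3].
  assert (Ea : ex_series a).
  { eapply ex_series_ext; [|exact E3]. intros k; simpl; ring. }
  split; auto.
  destruct (exR_plus _ _ E1 (proj1 (exR_scal (-1) b Hb))) as [_ _].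
  assert (S1 : Series (fun k => a k + b k) = Series a + Series b) by (apply exR_plus; auto).
  assert (S2 : Series (fun k => - a k + b k) = - Series a + Series b).
  { assert (Ena : ex_series (fun k => - a k)).
    { eapply ex_series_ext; [|exact (proj1 (exR_scal (-1) a Ea))]. intros; simpl; ring. }
    rewrite (proj2 (exR_plus _ _ Ena Hb)). rewrite Series_opp. auto. }
  rewrite S1, Eb2 in L1. rewrite S2, Eb2 in L2.
  apply Rabs_le. lra.
Qed.

Lemma Re_conj_bound t a b : 0 < t ->
  Rabs (fst (Cmult (Cconj a) b)) <= (t * sq a + sq b / t) / 2 /\
  Rabs (snd (Cmult (Cconj a) b)) <= (t * sq a + sq b / t) / 2.
Proof.
  intros Ht. destruct a as [a1 a2], b as [b1 b2]. unfold sq; simpl.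
  pose proof (amgm t a1 b1 Ht). pose proof (amgm t a2 b2 Ht).
  pose proof (amgm t a1 b2 Ht). pose proof (amgm t a2 b1 Ht).
  replace ((t * (a1 * a1 + a2 * a2) + (b1 * b1 + b2 * b2) / t) / 2) with
    ((t * (a1 * a1) + (b1 * b1) / t) / 2 + (t * (a2 * a2) + (b2 * b2) / t) / 2) by (field; intro; lra).
  split.
  - replace (a1 * b1 - - a2 * b2) with (a1 * b1 + a2 * b2) by ring.
    eapply Rle_trans; [apply Rabs_triang|]. lra.
  - replace (a1 * b2 + - a2 * b1) with (a1 * b2 + - (a2 * b1)) by ring.
    eapply Rle_trans; [apply Rabs_triang|]. rewrite Rabs_Ropp.
    replace ((t * (a1 * a1) + b1 * b1 / t) / 2 + (t * (a2 * a2) + b2 * b2 / t) / 2) with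
      ((t * (a1 * a1) + b2 * b2 / t) / 2 + (t * (a2 * a2) + b1 * b1 / t) / 2) by (field; intro; lra).
    lra.
Qed.

Definition ipRe (u v : vec) (k : nat) := fst (Cmult (Cconj (u k)) (v k)).
Definition ipIm (u v : vec) (k : nat) := snd (Cmult (Cconj (u k)) (v k)).

Lemma ip_ex u v : l2 u -> l2 v -> forall t, 0 < t ->
  ex_series (ipRe u v) /\ ex_series (ipIm u v) /\
  Rabs (fst (ip u v)) <= (t * nsq u + nsq v / t) / 2 /\
  Rabs (snd (ip u v)) <= (t * nsq u + nsq v / t) / 2.
Proof.
  intros Hu Hv t Ht. apply l2_eq in Hu. apply l2_eq in Hv.
  assert (Hb : ex_series (fun k => (t * sq (u k) + sq (v k) / t) / 2) /\
     Series (fun k => (t * sq (u k) + sq (v k) / t) / 2) = (t * nsq u + nsq v / t) / 2).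
  { destruct (exR_scal t _ Hu) as [E1 S1]. destruct (exR_scal (/t) _ Hv) as [E2 S2].
    destruct (exR_plus _ _ E1 E2) as [E3 S3]. destruct (exR_scal (/2) _ E3) as [E4 S4].
    split.
    - eapply ex_series_ext; [|exact E4]. intros k; simpl. field. lra.
    - rewrite !nsq_eq. rewrite <- (Series_ext (fun k => / 2 * (t * sq (u k) + / t * sq (v k)))).
      rewrite S4, S3, S1, S2. field. lra. intros; field; lra. }
  destruct Hb as [Hb1 Hb2].
  destruct (exR_abs (ipRe u v) _ (fun k => proj1 (Re_conj_bound t (u k) (v k) Ht)) Hb1) as [E1 B1].
  destruct (exR_abs (ipIm u v) _ (fun k => proj2 (Re_conj_bound t (u k) (v k) Ht)) Hb1) as [E2 B2].
  repeat split; auto.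
  - unfold ip. simpl. rewrite <- Hb2. exact B1.
  - unfold ip. simpl. rewrite <- Hb2. exact B2.
Qed.

Lemma ip_CS u v : l2 u -> l2 v -> sq (ip u v) <= 2 * (nsq u * nsq v).
Proof.
  intros Hu Hv. pose proof (nsq_nonneg _ Hu). pose proof (nsq_nonneg _ Hv).
  assert (H1 : fst (ip u v) * fst (ip u v) <= nsq u * nsq v).
  { apply t_trick; auto. intros t Ht. apply (ip_ex u v Hu Hv t Ht). }
  assert (H2 : snd (ip u v) * snd (ip u v) <= nsq u * nsq v).
  { apply t_trick; auto. intros t Ht. apply (ip_ex u v Hu Hv t Ht). }
  unfold sq. lra.
Qed.

Lemma ip_fst u v : fst (ip u v) = Series (ipRe u v).
Proof. reflexivity. Qed.
Lemma ip_snd u v : snd (ip u v) = Series (ipIm u v).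
Proof. reflexivity. Qed.

Lemma ip_conj u v : ip v u = Cconj (ip u v).
Proof.
  unfold ip, Cconj. simpl. f_equal.
  - apply Series_ext. intros; simpl; ring.
  - rewrite <- Series_opp. apply Series_ext. intros; simpl; ring.
Qed.

Lemma ip_e_l m f : ip (e m) f = f m.
Proof.
  unfold ip. apply injective_projections; simpl.
  - rewrite (Series_single _ m). unfold e; rewrite Nat.eqb_refl; simpl; ring.
    intros k Hk; unfold e; rewrite (proj2 (Nat.eqb_neq k m) Hk); simpl; ring.
  - rewrite (Series_single _ m). unfold e; rewrite Nat.eqb_refl; simpl; ring.
    intros k Hk; unfold e; rewrite (proj2 (Nat.eqb_neq k m) Hk); simpl; ring.
Qed.

Lemma ip_e_r m f : ip f (e m) = Cconj (f m).
Proof. rewrite ip_conj, ip_e_l. auto. Qed.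

Lemma ip_add_r u v w : l2 u -> l2 v -> l2 w -> ip u (vadd v w) = Cplus (ip u v) (ip u w).
Proof.
  intros Hu Hv Hw.
  destruct (ip_ex u v Hu Hv 1 Rlt_0_1) as [E1 [E2 _]].
  destruct (ip_ex u w Hu Hw 1 Rlt_0_1) as [E3 [E4 _]].
  apply injective_projections; unfold Cplus; cbn [fst snd]; rewrite ?ip_fst, ?ip_snd.
  - rewrite <- (proj2 (exR_plus _ _ E1 E3)). apply Series_ext. intros k; unfold ipRe, vadd; simpl; ring.
  - rewrite <- (proj2 (exR_plus _ _ E2 E4)). apply Series_ext. intros k; unfold ipIm, vadd; simpl; ring.
Qed.

Lemma ip_scal_r u c v : l2 u -> l2 v -> ip u (vscal c v) = Cmult c (ip u v).
Proof.
  intros Hu Hv.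
  destruct (ip_ex u v Hu Hv 1 Rlt_0_1) as [E1 [E2 _]].
  destruct (exR_scal (fst c) _ E1) as [F1 S1]. destruct (exR_scal (fst c) _ E2) as [F2 S2].
  destruct (exR_scal (- snd c) _ E2) as [F3 S3]. destruct (exR_scal (snd c) _ E1) as [F4 S4].
  apply injective_projections; unfold Cmult; cbn [fst snd]; rewrite ?ip_fst, ?ip_snd.
  - replace (fst c * Series (ipRe u v) - snd c * Series (ipIm u v)) with
      (fst c * Series (ipRe u v) + - snd c * Series (ipIm u v)) by ring.
    rewrite <- S1, <- S3, <- (proj2 (exR_plus _ _ F1 F3)).
    apply Series_ext. intros k; unfold ipRe, ipIm, vscal; simpl; ring.
  - replace (fst c * Series (ipIm u v) + snd c * Series (ipRe u v)) with
      (fst c * Series (ipIm u v) + snd c * Series (ipRe u v)) by ring.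
    rewrite <- S2, <- S4, <- (proj2 (exR_plus _ _ F2 F4)).
    apply Series_ext. intros k; unfold ipRe, ipIm, vscal; simpl; ring.
Qed.

Lemma ip_add_l u v w : l2 u -> l2 v -> l2 w -> ip (vadd v w) u = Cplus (ip v u) (ip w u).
Proof.
  intros. rewrite ip_conj, ip_add_r by auto. rewrite (ip_conj v u), (ip_conj w u).
  destruct (ip u v), (ip u w); unfold Cconj; simpl. ceq.
Qed.

Lemma ip_scal_l u c v : l2 u -> l2 v -> ip (vscal c v) u = Cmult (Cconj c) (ip v u).
Proof.
  intros. rewrite ip_conj, ip_scal_r by auto. rewrite (ip_conj v u).
  destruct (ip u v), c; unfold Cconj; simpl. ceq.
Qed.

Definition Clim (s : nat -> C) (l : C) : Prop :=
  forall eps, 0 < eps -> exists N, forall n, (N <= n)%nat -> sq (Cminus (s n) l) < eps.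

Lemma Clim_unique s l m : Clim s l -> Clim s m -> l = m.
Proof.
  intros H1 H2.
  assert (sq (Cminus l m) = 0).
  { apply Rle_antisym; [|apply sq_nonneg]. apply Rnot_lt_le. intros Hlt.
    destruct (H1 (sq (Cminus l m) / 4) ltac:(lra)) as [N1 HN1].
    destruct (H2 (sq (Cminus l m) / 4) ltac:(lra)) as [N2 HN2].
    specialize (HN1 (max N1 N2) ltac:(lia)). specialize (HN2 (max N1 N2) ltac:(lia)).
    pose proof (sq_minus (Cminus (s (max N1 N2)) m) (Cminus (s (max N1 N2)) l)).
    replace (Cminus (Cminus (s (max N1 N2)) m) (Cminus (s (max N1 N2)) l)) with (Cminus l m) in H by ceq.
    lra. }
  apply sq_zero in H. revert H. destruct l, m; unfold RtoC, Cminus, Cplus, Copp; simpl; intros H.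
  injection H; intros; f_equal; f_equal; lra.
Qed.

Lemma Clim_bound s l (r : nat -> R) N0 :
  (forall n, (N0 <= n)%nat -> sq (Cminus (s n) l) <= r n) ->
  (forall eps, 0 < eps -> exists N, forall n, (N <= n)%nat -> r n < eps) -> Clim s l.
Proof.
  intros H1 H2 eps Heps. destruct (H2 eps Heps) as [N HN]. exists (max N N0).
  intros n Hn. specialize (H1 n ltac:(lia)). specialize (HN n ltac:(lia)). lra.
Qed.

Lemma Clim_sq_le s l B : Clim s l -> (forall n, sq (s n) <= B) -> sq l <= 2 * B.
Proof.
  intros H HB. apply Rnot_lt_le. intros Hlt.
  destruct (H ((sq l - 2 * B) / 2) ltac:(lra)) as [N HN].
  specialize (HN N (le_n _)). specialize (HB N).
  pose proof (sq_add (s N) (Cminus l (s N))).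
  replace (Cplus (s N) (Cminus l (s N))) with l in H0 by ceq.
  replace (Cminus l (s N)) with (Cmult (RtoC (-1)) (Cminus (s N) l)) in H0 by ceq.
  rewrite sq_mult in H0. replace (sq (RtoC (-1))) with 1 in H0 by (unfold sq; simpl; ring). lra.
Qed.

Lemma Clim_rconv f l1 l2 : rconv (fun k => fst (f k)) l1 -> rconv (fun k => snd (f k)) l2 ->
  Clim (fun K => csum K f) (l1, l2).
Proof.
  intros H1 H2 eps Heps.
  assert (He : 0 < sqrt (eps / 2)) by (apply sqrt_lt_R0; lra).
  destruct (H1 _ He) as [N1 HN1]. destruct (H2 _ He) as [N2 HN2].
  exists (max N1 N2). intros n Hn. specialize (HN1 n ltac:(lia)). specialize (HN2 n ltac:(lia)).
  unfold sq, Cminus, Cplus, Copp. simpl. rewrite csum_fst, csum_snd.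
  assert (forall x, Rabs x < sqrt (eps / 2) -> (x * x) < eps / 2).
  { intros x Hx. rewrite <- (sqrt_sqrt (eps/2)) by lra.
    pose proof (Rabs_pos x). replace (x * x) with (Rabs x * Rabs x).
    apply Rmult_le_0_lt_compat; auto. rewrite <- Rabs_mult. apply Rabs_right. 
    pose proof (Rle_0_sqr x). unfold Rsqr in *; lra. }
  apply H in HN1. apply H in HN2.
  replace (rsum n (fun k => fst (f k)) + - l1) with (rsum n (fun k => fst (f k)) - l1) by ring.
  replace (rsum n (fun k => snd (f k)) + - l2) with (rsum n (fun k => snd (f k)) - l2) by ring.
  lra.
Qed.

Lemma ip_Clim u v : l2 u -> l2 v -> Clim (fun K => csum K (fun k => Cmult (Cconj (u k)) (v k))) (ip u v).
Proof.
  intros Hu Hv. destruct (ip_ex u v Hu Hv 1 Rlt_0_1) as [E1 [E2 _]].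
  replace (ip u v) with (fst (ip u v), snd (ip u v)) by (destruct (ip u v); auto).
  apply Clim_rconv; apply Series_rconv; auto.
Qed.


Section HB.
Variable T : op.
Hypothesis HT : Hbounded T.

Lemma Hb_l2 x : l2 x -> l2 (T x).
Proof. destruct HT as [H _]. auto. Qed.
Lemma Hb_add x y : l2 x -> l2 y -> T (vadd x y) = vadd (T x) (T y).
Proof. destruct HT as [_ [_ [H _]]]. intros. apply veq_eq. auto. Qed.
Lemma Hb_scal c x : l2 x -> T (vscal c x) = vscal c (T x).
Proof. destruct HT as [_ [_ [_ [H _]]]]. intros. apply veq_eq. auto. Qed.
Lemma Hb_bound : exists M, 0 <= M /\ forall x, l2 x -> nsq (T x) <= M * nsq x.
Proof.
  destruct HT as [_ [_ [_ [_ [M HM]]]]]. exists (Rmax M 0). split; [apply Rmax_r|].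
  intros x Hx. eapply Rle_trans; [apply HM; auto|]. apply Rmult_le_compat_r; [apply nsq_nonneg; auto|apply Rmax_l].
Qed.
Lemma Hb_zero : T vzero = vzero.
Proof.
  replace vzero with (vscal (RtoC 0) vzero) at 1 by (apply functional_extensionality; intros; unfold vscal, vzero; ceq).
  rewrite Hb_scal by apply l2_vzero. apply functional_extensionality; intros; unfold vscal, vzero; ceq.
Qed.
Lemma Hb_sub x y : l2 x -> l2 y -> T (vsub x y) = vsub (T x) (T y).
Proof.
  intros Hx Hy.
  replace (vsub x y) with (vadd x (vscal (RtoC (-1)) y)) by (apply functional_extensionality; intros; unfold vadd, vsub, vscal; ceq).
  rewrite Hb_add, Hb_scal; auto. 2: apply l2_vscal; auto.
  apply functional_extensionality; intros; unfold vadd, vsub, vscal; ceq.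
Qed.
End HB.

Lemma l2_vsum K f : (forall k, (k < K)%nat -> l2 (f k)) -> l2 (vsum K f).
Proof.
  induction K; intros H; simpl; [apply l2_vzero|].
  apply l2_vadd; auto.
Qed.

Lemma Hb_vsum T K f : Hbounded T -> (forall k, (k < K)%nat -> l2 (f k)) -> T (vsum K f) = vsum K (fun k => T (f k)).
Proof.
  intros HT. induction K; intros H; simpl; [apply Hb_zero; auto|].
  rewrite Hb_add; auto. rewrite IHK; auto. apply l2_vsum; auto.
Qed.

Definition vtrunc (K : nat) (x : vec) : vec := fun k => if (k <? K)%nat then x k else RtoC 0.
Definition vtail (K : nat) (x : vec) : vec := fun k => if (k <? K)%nat then RtoC 0 else x k.

Lemma vtrunc_vsum K x : vtrunc K x = vsum K (fun k => vscal (x k) (e k)).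
Proof.
  apply functional_extensionality; intros p. rewrite vsum_comp. unfold vtrunc.
  rewrite (csum_single K _ p).
  - unfold vscal, e. rewrite Nat.eqb_refl. destruct (p <? K)%nat; ceq.
  - intros k Hk. unfold vscal, e. rewrite (proj2 (Nat.eqb_neq p k)) by auto. ceq.
Qed.

Lemma l2_vtrunc K x : l2 (vtrunc K x).
Proof. rewrite vtrunc_vsum. apply l2_vsum. intros; apply l2_vscal, l2_e. Qed.

Lemma vtrunc_tail K x : x = vadd (vtrunc K x) (vtail K x).
Proof. apply functional_extensionality; intros k. unfold vadd, vtrunc, vtail. destruct (k <? K)%nat; ceq. Qed.

Lemma nsq_vtail K x : nsq (vtail K x) = Series (rtail K (fun k => sq (x k))).
Proof. rewrite nsq_eq. apply Series_ext. intros k. unfold vtail, rtail. destruct (k <? K)%nat; auto. apply sq_0. Qed.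

Lemma l2_vtail K x : l2 x -> l2 (vtail K x).
Proof.
  intros H. apply l2_eq in H. apply l2_eq. destruct (Series_split K _ H) as [H1 _].
  eapply ex_series_ext; [|exact H1]. intros k. unfold vtail, rtail. destruct (k <? K)%nat; auto. rewrite sq_0; auto.
Qed.

Lemma vtail_small x : l2 x -> forall eps, 0 < eps -> exists N, forall K, (N <= K)%nat -> nsq (vtail K x) < eps.
Proof.
  intros H eps Heps. apply l2_eq in H. destruct (tail_small _ (sqx_nonneg x) H eps Heps) as [N HN].
  exists N. intros K HK. rewrite nsq_vtail. auto.
Qed.

Lemma nsq_vtrunc_le K x : l2 x -> nsq (vtrunc K x) <= nsq x.
Proof.
  intros H. rewrite !nsq_eq. apply l2_eq in H. apply ser_cmp; auto.
  intros k; split; [apply sq_nonneg|]. unfold vtrunc. destruct (k <? K)%nat; [lra|]. rewrite sq_0. apply sq_nonneg.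
Qed.

Lemma Hb_trunc_comp T K x p : Hbounded T ->
  T (vtrunc K x) p = csum K (fun k => Cmult (x k) (T (e k) p)).
Proof.
  intros HT. rewrite vtrunc_vsum, Hb_vsum; auto. 2: intros; apply l2_vscal, l2_e.
  rewrite vsum_comp. apply csum_ext. intros k _. rewrite Hb_scal; auto. apply l2_e.
Qed.

Lemma Hb_expand T x p : Hbounded T -> l2 x -> Clim (fun K => T (vtrunc K x) p) (T x p).
Proof.
  intros HT Hx. destruct (Hb_bound T HT) as [M [HM0 HM]].
  apply (Clim_bound _ _ (fun K => M * nsq (vtail K x)) O).
  - intros K _. rewrite (vtrunc_tail K x) at 2. rewrite Hb_add; auto.
    2: apply l2_vtrunc. 2: apply l2_vtail; auto.
    unfold vadd.
    replace (Cminus (T (vtrunc K x) p) (Cplus (T (vtrunc K x) p) (T (vtail K x) p)))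
      with (Cmult (RtoC (-1)) (T (vtail K x) p)) by ceq.
    rewrite sq_mult. replace (sq (RtoC (-1))) with 1 by (unfold sq; simpl; ring).
    rewrite Rmult_1_l. eapply Rle_trans; [apply comp_le_nsq; apply Hb_l2; auto; apply l2_vtail; auto|].
    apply HM. apply l2_vtail; auto.
  - intros eps Heps. destruct (vtail_small x Hx (eps / (M + 1))) as [N HN].
    { apply Rdiv_lt_0_compat; lra. }
    exists N. intros K HK. specialize (HN K HK).
    pose proof (nsq_nonneg _ (l2_vtail K x Hx)).
    apply Rle_lt_trans with ((M + 1) * nsq (vtail K x)); [nra|].
    replace eps with ((M + 1) * (eps / (M + 1))) by (field; intro; lra).
    apply Rmult_lt_compat_l; lra.
Qed.

Lemma rsum_abs n f : Rabs (rsum n f) <= rsum n (fun k => Rabs (f k)).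
Proof. induction n; simpl. rewrite Rabs_R0; lra. eapply Rle_trans; [apply Rabs_triang|]. lra. Qed.

Lemma Cconj_conj a : Cconj (Cconj a) = a.
Proof. destruct a; unfold Cconj; simpl; f_equal; ring. Qed.

Lemma comp_bound T x p : Hbounded T -> ex_series (fun k => nsq (T (e k))) -> l2 x ->
  sq (T x p) <= 2 * (2 * (nsq x * Series (fun k => nsq (T (e k))))).
Proof.
  intros HT HS Hx.
  set (H := Series (fun k => nsq (T (e k)))).
  assert (HH : 0 <= H) by (apply Series_nonneg; auto; intros; apply nsq_nonneg, Hb_l2, l2_e; auto).
  pose proof (nsq_nonneg x Hx).
  apply (Clim_sq_le _ _ _ (Hb_expand T x p HT Hx)).
  intros K. rewrite Hb_trunc_comp by auto.
  set (f := fun k => Cmult (x k) (T (e k) p)).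
  assert (B : forall t, 0 < t -> Rabs (fst (csum K f)) <= (t * nsq x + H / t) / 2 /\
                               Rabs (snd (csum K f)) <= (t * nsq x + H / t) / 2).
  { intros t Ht.
    assert (Hsx : rsum K (fun k => sq (x k)) <= nsq x).
    { rewrite nsq_eq. apply rsum_le_Series. apply sqx_nonneg. apply l2_eq; auto. }
    assert (Hsw : rsum K (fun k => sq (T (e k) p)) <= H).
    { eapply Rle_trans; [|apply (rsum_le_Series _ K); auto; intros; apply nsq_nonneg, Hb_l2, l2_e; auto].
      apply rsum_le. intros k _. apply comp_le_nsq. apply Hb_l2, l2_e; auto. }
    assert (Bt : forall k, Rabs (fst (f k)) <= (t * sq (x k) + sq (T (e k) p) / t) / 2 /\
                           Rabs (snd (f k)) <= (t * sq (x k) + sq (T (e k) p) / t) / 2).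
    { intros k. unfold f. pose proof (Re_conj_bound t (Cconj (x k)) (T (e k) p) Ht) as R.
      rewrite Cconj_conj, sq_conj in R. exact R. }
    assert (Sb : rsum K (fun k => (t * sq (x k) + sq (T (e k) p) / t) / 2) <= (t * nsq x + H / t) / 2).
    { replace (rsum K (fun k => (t * sq (x k) + sq (T (e k) p) / t) / 2)) with
        ((t * rsum K (fun k => sq (x k)) + rsum K (fun k => sq (T (e k) p)) / t) / 2).
      - apply Rmult_le_compat_r; [lra|]. apply Rplus_le_compat. apply Rmult_le_compat_l; lra.
        apply Rmult_le_compat_r; [apply Rlt_le, Rinv_0_lt_compat; lra| lra].
      - clear -Ht. induction K; simpl. field; intro; lra. rewrite <- IHK. field; intro; lra. }
    split.
    - rewrite csum_fst. eapply Rle_trans; [apply rsum_abs|]. eapply Rle_trans; [|exact Sb].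
      apply rsum_le. intros k _. apply Bt.
    - rewrite csum_snd. eapply Rle_trans; [apply rsum_abs|]. eapply Rle_trans; [|exact Sb].
      apply rsum_le. intros k _. apply Bt. }
  assert (C1 : fst (csum K f) * fst (csum K f) <= nsq x * H) by (apply t_trick; auto; intros; apply B; auto).
  assert (C2 : snd (csum K f) * snd (csum K f) <= nsq x * H) by (apply t_trick; auto; intros; apply B; auto).
  unfold sq. lra.
Qed.


Lemma Hb_intro T :
  (forall x, l2 x -> l2 (T x)) ->
  (forall x y, l2 x -> l2 y -> T (vadd x y) = vadd (T x) (T y)) ->
  (forall c x, l2 x -> T (vscal c x) = vscal c (T x)) ->
  (exists M, forall x, l2 x -> nsq (T x) <= M * nsq x) -> Hbounded T.
Proof.
  intros H1 H2 H3 H4. repeat split; auto.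
  - intros x y _ _ E. apply veq_eq in E. subst. intros k; auto.
  - intros x y Hx Hy k. rewrite H2; auto.
  - intros c x Hx k. rewrite H3; auto.
Qed.

Lemma HS_Hb X : HS X -> Hbounded X.
Proof. intros [H _]; auto. Qed.
Lemma HS_ex X : HS X -> ex_series (fun n => nsq (X (e n))).
Proof. intros [_ H]; auto. Qed.
Lemma hs_nonneg X : HS X -> 0 <= hs_nsq X.
Proof. intros [H1 H2]. apply Series_nonneg; auto. intros; apply nsq_nonneg, Hb_l2, l2_e; auto. Qed.

Lemma HS_add X Y : HS X -> HS Y -> HS (op_add X Y) /\ hs_nsq (op_add X Y) <= 2 * hs_nsq X + 2 * hs_nsq Y.
Proof.
  intros HX HY. pose proof (HS_Hb _ HX) as BX. pose proof (HS_Hb _ HY) as BY.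
  assert (Hb : Hbounded (op_add X Y)).
  { apply Hb_intro; unfold op_add.
    - intros x Hx. apply l2_vadd; apply Hb_l2; auto.
    - intros x y Hx Hy. rewrite (Hb_add X), (Hb_add Y); auto.
      apply functional_extensionality; intros k; unfold vadd; ceq.
    - intros c x Hx. rewrite (Hb_scal X), (Hb_scal Y); auto.
      apply functional_extensionality; intros k; unfold vadd, vscal; ceq.
    - destruct (Hb_bound X BX) as [M1 [_ HM1]]. destruct (Hb_bound Y BY) as [M2 [_ HM2]].
      exists (2 * M1 + 2 * M2). intros x Hx.
      eapply Rle_trans; [apply l2_vadd; apply Hb_l2; auto|].
      specialize (HM1 x Hx). specialize (HM2 x Hx). lra. }
  assert (Hc : forall n, 0 <= nsq (op_add X Y (e n)) <= 2 * nsq (X (e n)) + 2 * nsq (Y (e n))).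
  { intros n. split. apply nsq_nonneg, Hb_l2, l2_e; auto. apply l2_vadd; apply Hb_l2; auto; apply l2_e. }
  destruct (exR_scal 2 _ (HS_ex _ HX)) as [E1 S1]. destruct (exR_scal 2 _ (HS_ex _ HY)) as [E2 S2].
  destruct (exR_plus _ _ E1 E2) as [E3 S3].
  destruct (ser_cmp _ _ Hc E3) as [E4 S4].
  split; [split; auto|]. unfold hs_nsq. rewrite S3, S1, S2 in S4. exact S4.
Qed.

Lemma HS_scal c X : HS X -> HS (op_scal c X) /\ hs_nsq (op_scal c X) = sq c * hs_nsq X.
Proof.
  intros HX. pose proof (HS_Hb _ HX) as BX.
  assert (Hb : Hbounded (op_scal c X)).
  { apply Hb_intro; unfold op_scal.
    - intros x Hx. apply l2_vscal; apply Hb_l2; auto.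
    - intros x y Hx Hy. rewrite (Hb_add X); auto.
      apply functional_extensionality; intros k; unfold vadd, vscal; ceq.
    - intros d x Hx. rewrite (Hb_scal X); auto.
      apply functional_extensionality; intros k; unfold vadd, vscal; ceq.
    - destruct (Hb_bound X BX) as [M1 [_ HM1]].
      exists (sq c * M1). intros x Hx. rewrite nsq_vscal.
      specialize (HM1 x Hx). pose proof (sq_nonneg c). rewrite Rmult_assoc. apply Rmult_le_compat_l; auto. }
  destruct (exR_scal (sq c) _ (HS_ex _ HX)) as [E1 S1].
  split; [split; auto|].
  - eapply ex_series_ext; [|exact E1]. intros n; unfold op_scal; rewrite nsq_vscal; auto.
  - unfold hs_nsq. rewrite <- S1. apply Series_ext. intros n; unfold op_scal; rewrite nsq_vscal; auto.
Qed.

Lemma op_sub_eq X Y : op_sub X Y = op_add X (op_scal (RtoC (-1)) Y).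
Proof.
  apply functional_extensionality; intros x. apply functional_extensionality; intros k.
  unfold op_sub, op_add, op_scal, vsub, vadd, vscal. ceq.
Qed.

Lemma HS_sub X Y : HS X -> HS Y -> HS (op_sub X Y) /\ hs_nsq (op_sub X Y) <= 2 * hs_nsq X + 2 * hs_nsq Y.
Proof.
  intros HX HY. rewrite op_sub_eq.
  destruct (HS_scal (RtoC (-1)) Y HY) as [H1 E1].
  destruct (HS_add _ _ HX H1) as [H2 E2]. split; auto.
  rewrite E1 in E2. replace (sq (RtoC (-1))) with 1 in E2 by (unfold sq; simpl; ring). lra.
Qed.

Lemma HS_zero : HS op_zero /\ hs_nsq op_zero = 0.
Proof.
  assert (Hb : Hbounded op_zero).
  { apply Hb_intro; unfold op_zero.
    - intros; apply l2_vzero.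
    - intros. apply functional_extensionality; intros k; unfold vadd, vzero; ceq.
    - intros. apply functional_extensionality; intros k; unfold vscal, vzero; ceq.
    - exists 0. intros. rewrite nsq_vzero. lra. }
  unfold hs_nsq, op_zero. cbv beta. rewrite nsq_vzero. split; [split; auto|].
  - exists 0. apply rconv_is_series. eapply rconv_ext; [|apply (rconv_fin (fun _ => 0) 0); auto].
    intros; cbv beta; unfold op_zero; rewrite nsq_vzero; auto.
  - apply (Series_single (fun _ => 0) 0). auto.
Qed.

Definition osum (K : nat) (F : nat -> op) : op := fun x => vsum K (fun k => F k x).

Lemma HS_osum K F : (forall k, (k < K)%nat -> HS (F k)) -> HS (osum K F).
Proof.
  induction K; intros H.
  - apply HS_zero.
  - change (osum (S K) F) with (op_add (osum K F) (F K)). apply HS_add; auto.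
Qed.

Definition E (m j : nat) : op := fun f => vscal (f j) (e m).

Lemma HS_E m j : HS (E m j).
Proof.
  assert (Hb : Hbounded (E m j)).
  { apply Hb_intro; unfold E.
    - intros; apply l2_vscal, l2_e.
    - intros. apply functional_extensionality; intros k; unfold vadd, vscal; ceq.
    - intros. apply functional_extensionality; intros k; unfold vadd, vscal; ceq.
    - exists 1. intros x Hx. rewrite nsq_vscal, nsq_e. rewrite Rmult_1_r, Rmult_1_l. apply comp_le_nsq; auto. }
  split; auto. unfold E. exists 1. apply rconv_is_series.
  replace 1 with (nsq (vscal (e j j) (e m))).
  - apply (rconv_single (fun n => nsq (vscal (e n j) (e m))) j). intros k Hk.
    rewrite nsq_vscal. unfold e at 1. rewrite (proj2 (Nat.eqb_neq j k)) by auto. rewrite sq_0; ring.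
  - rewrite nsq_vscal, nsq_e. unfold e. rewrite Nat.eqb_refl. unfold sq; simpl; ring.
Qed.

Definition PS (S : nat -> bool) (X : op) : op := fun f => fun i => if S i then X f i else RtoC 0.

Lemma nsq_PS_le (S : nat -> bool) (v : vec) : l2 v -> l2 (fun i => if S i then v i else RtoC 0) /\ nsq (fun i => if S i then v i else RtoC 0) <= nsq v.
Proof.
  intros Hv. apply l2_eq in Hv.
  assert (Hc : forall k, 0 <= sq (if S k then v k else RtoC 0) <= sq (v k)).
  { intros k. split. apply sq_nonneg. destruct (S k); [lra|]. rewrite sq_0; apply sq_nonneg. }
  destruct (ser_cmp _ _ Hc Hv) as [H1 H2]. split; [apply l2_eq; auto|]. rewrite !nsq_eq; auto.
Qed.

Lemma HS_PS S X : HS X -> HS (PS S X) /\ hs_nsq (PS S X) <= hs_nsq X.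
Proof.
  intros HX. pose proof (HS_Hb _ HX) as BX.
  assert (Hb : Hbounded (PS S X)).
  { apply Hb_intro; unfold PS.
    - intros x Hx. apply nsq_PS_le. apply Hb_l2; auto.
    - intros x y Hx Hy. rewrite (Hb_add X); auto.
      apply functional_extensionality; intros k; unfold vadd; destruct (S k); auto; ceq.
    - intros d x Hx. rewrite (Hb_scal X); auto.
      apply functional_extensionality; intros k; unfold vscal; destruct (S k); auto; ceq.
    - destruct (Hb_bound X BX) as [M1 [_ HM1]].
      exists M1. intros x Hx. eapply Rle_trans; [apply nsq_PS_le; apply Hb_l2; auto|]. auto. }
  assert (Hc : forall n, 0 <= nsq (PS S X (e n)) <= nsq (X (e n))).
  { intros n. split. apply nsq_nonneg, Hb_l2, l2_e; auto. apply nsq_PS_le, Hb_l2, l2_e; auto. }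
  destruct (ser_cmp _ _ Hc (HS_ex _ HX)) as [H1 H2]. split; [split|]; auto.
Qed.

Definition Yop (n : nat) (y : vec) : op := fun f => vscal (ip y f) (e n).

Lemma HS_Y n y : l2 y -> HS (Yop n y) /\ hs_nsq (Yop n y) = nsq y.
Proof.
  intros Hy.
  assert (Hb : Hbounded (Yop n y)).
  { apply Hb_intro; unfold Yop.
    - intros; apply l2_vscal, l2_e.
    - intros. rewrite ip_add_r; auto. apply functional_extensionality; intros k; unfold vadd, vscal; ceq.
    - intros. rewrite ip_scal_r; auto. apply functional_extensionality; intros k; unfold vadd, vscal; ceq.
    - exists (2 * nsq y). intros x Hx. rewrite nsq_vscal, nsq_e, Rmult_1_r.
      pose proof (ip_CS y x Hy Hx). lra. }
  assert (Ek : forall k, nsq (Yop n y (e k)) = sq (y k)).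
  { intros k. unfold Yop. rewrite nsq_vscal, nsq_e, ip_e_r, sq_conj. ring. }
  split; [split; auto|].
  - eapply ex_series_ext; [|apply (proj1 (l2_eq y)); exact Hy]. intros; rewrite Ek; auto.
  - unfold hs_nsq. rewrite nsq_eq. apply Series_ext; auto.
Qed.


Definition cser (f : nat -> C) : C := (Series (fun n => fst (f n)), Series (fun n => snd (f n))).
Definition cex (f : nat -> C) : Prop := ex_series (fun n => fst (f n)) /\ ex_series (fun n => snd (f n)).

Lemma cser_plus f g : cex f -> cex g -> cex (fun n => Cplus (f n) (g n)) /\ cser (fun n => Cplus (f n) (g n)) = Cplus (cser f) (cser g).
Proof.
  intros [F1 F2] [G1 G2].
  destruct (exR_plus _ _ F1 G1) as [H1 S1]. destruct (exR_plus _ _ F2 G2) as [H2 S2].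
  split; [split|]; [exact H1|exact H2|]. unfold cser, Cplus. cbn [fst snd]. rewrite S1, S2. auto.
Qed.

Lemma cser_scal c f : cex f -> cex (fun n => Cmult c (f n)) /\ cser (fun n => Cmult c (f n)) = Cmult c (cser f).
Proof.
  intros [F1 F2].
  destruct (exR_scal (fst c) _ F1) as [A1 SA1]. destruct (exR_scal (- snd c) _ F2) as [A2 SA2].
  destruct (exR_plus _ _ A1 A2) as [A3 SA3].
  destruct (exR_scal (fst c) _ F2) as [B1 SB1]. destruct (exR_scal (snd c) _ F1) as [B2 SB2].
  destruct (exR_plus _ _ B1 B2) as [B3 SB3].
  split; [split|].
  - eapply ex_series_ext; [|exact A3]. intros; simpl; ring.
  - eapply ex_series_ext; [|exact B3]. intros; simpl; ring.
  - unfold cser, Cmult. cbn [fst snd]. f_equal.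
    + transitivity (Series (fun n => fst c * fst (f n) + - snd c * snd (f n))).
      apply Series_ext; intros; ring. rewrite SA3, SA1, SA2. ring.
    + transitivity (Series (fun n => fst c * snd (f n) + snd c * fst (f n))).
      apply Series_ext; intros; ring. rewrite SB3, SB1, SB2. ring.
Qed.

Lemma cser_ext f g : (forall n, f n = g n) -> cser f = cser g.
Proof. intros H. unfold cser. f_equal; apply Series_ext; intros; rewrite H; auto. Qed.

Lemma cser_single f p : (forall n, n <> p -> f n = RtoC 0) -> cser f = f p.
Proof.
  intros H. unfold cser. apply injective_projections; cbn [fst snd];
  (rewrite (Series_single _ p); [auto| intros n Hn; rewrite H; auto]).
Qed.

Lemma ip2_cser X Y : ip2 X Y = cser (fun n => ip (X (e n)) (Y (e n))).
Proof. reflexivity. Qed.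

Lemma ip2_cex X Y : HS X -> HS Y -> cex (fun n => ip (X (e n)) (Y (e n))).
Proof.
  intros HX HY.
  assert (Hb : ex_series (fun n => (1 * nsq (X (e n)) + nsq (Y (e n)) / 1) / 2)).
  { destruct (exR_plus _ _ (HS_ex _ HX) (HS_ex _ HY)) as [E1 _].
    destruct (exR_scal (/2) _ E1) as [E2 _]. eapply ex_series_ext; [|exact E2]. intros; simpl; field. }
  assert (Hu : forall n, l2 (X (e n))) by (intros; apply Hb_l2, l2_e; apply HS_Hb; auto).
  assert (Hv : forall n, l2 (Y (e n))) by (intros; apply Hb_l2, l2_e; apply HS_Hb; auto).
  split.
  - apply (exR_abs _ _ (fun n => proj1 (proj2 (proj2 (ip_ex _ _ (Hu n) (Hv n) 1 Rlt_0_1)))) Hb).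
  - apply (exR_abs _ _ (fun n => proj2 (proj2 (proj2 (ip_ex _ _ (Hu n) (Hv n) 1 Rlt_0_1)))) Hb).
Qed.

Lemma ip2_add_r X Y Z : HS X -> HS Y -> HS Z -> ip2 X (op_add Y Z) = Cplus (ip2 X Y) (ip2 X Z).
Proof.
  intros HX HY HZ. rewrite !ip2_cser.
  rewrite <- (proj2 (cser_plus _ _ (ip2_cex X Y HX HY) (ip2_cex X Z HX HZ))).
  apply cser_ext. intros n. unfold op_add. apply ip_add_r; apply Hb_l2; try apply l2_e; apply HS_Hb; auto.
Qed.

Lemma ip2_scal_r X c Y : HS X -> HS Y -> ip2 X (op_scal c Y) = Cmult c (ip2 X Y).
Proof.
  intros HX HY. rewrite !ip2_cser.
  rewrite <- (proj2 (cser_scal c _ (ip2_cex X Y HX HY))).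
  apply cser_ext. intros n. unfold op_scal. apply ip_scal_r; apply Hb_l2; try apply l2_e; apply HS_Hb; auto.
Qed.

Lemma ip2_conj X Y : ip2 Y X = Cconj (ip2 X Y).
Proof.
  rewrite !ip2_cser. unfold cser, Cconj. cbn [fst snd]. f_equal.
  - apply Series_ext; intros; rewrite ip_conj; auto.
  - rewrite <- Series_opp. apply Series_ext; intros; rewrite ip_conj; auto.
Qed.

Lemma ip2_add_l X Y Z : HS X -> HS Y -> HS Z -> ip2 (op_add Y Z) X = Cplus (ip2 Y X) (ip2 Z X).
Proof.
  intros. rewrite ip2_conj, ip2_add_r by auto. rewrite (ip2_conj Y X), (ip2_conj Z X).
  destruct (ip2 X Y), (ip2 X Z); unfold Cconj; simpl. ceq.
Qed.

Lemma ip2_scal_l X c Y : HS X -> HS Y -> ip2 (op_scal c Y) X = Cmult (Cconj c) (ip2 Y X).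
Proof.
  intros. rewrite ip2_conj, ip2_scal_r by auto. rewrite (ip2_conj Y X).
  destruct (ip2 X Y), c; unfold Cconj; simpl. ceq.
Qed.

Lemma ip2_ext_r X Y Z : (forall n, Y (e n) = Z (e n)) -> ip2 X Y = ip2 X Z.
Proof. intros H. rewrite !ip2_cser. apply cser_ext. intros; rewrite H; auto. Qed.

Lemma ip2_E T n k : HS T -> ip2 (E n k) T = T (e k) n.
Proof.
  intros HT. rewrite ip2_cser. rewrite (cser_single _ k).
  - unfold E. rewrite ip_scal_l, ip_e_l. unfold e at 1. rewrite Nat.eqb_refl. ceq.
    apply Hb_l2, l2_e; apply HS_Hb; auto. apply l2_e.
  - intros l Hl. unfold E. rewrite ip_scal_l, ip_e_l. unfold e at 1. rewrite (proj2 (Nat.eqb_neq k l)) by auto. ceq.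
    apply Hb_l2, l2_e; apply HS_Hb; auto. apply l2_e.
Qed.

Section AFacts.
Variable A : op -> op.
Hypothesis HA : S2bounded A.

Lemma A_HS X : HS X -> HS (A X).
Proof. destruct HA as [H _]. auto. Qed.
Lemma A_add X Y x : HS X -> HS Y -> l2 x -> A (op_add X Y) x = vadd (A X x) (A Y x).
Proof. destruct HA as [_ [_ [H _]]]. intros. apply veq_eq. apply H; auto. Qed.
Lemma A_scal c X x : HS X -> l2 x -> A (op_scal c X) x = vscal c (A X x).
Proof. destruct HA as [_ [_ [_ [H _]]]]. intros. apply veq_eq. apply H; auto. Qed.
Lemma A_bound : exists M, 0 <= M /\ forall X, HS X -> hs_nsq (A X) <= M * hs_nsq X.
Proof.
  destruct HA as [_ [_ [_ [_ [M HM]]]]]. exists (Rmax M 0). split; [apply Rmax_r|].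
  intros X HX. eapply Rle_trans; [apply HM; auto|]. apply Rmult_le_compat_r; [apply hs_nonneg; auto|apply Rmax_l].
Qed.
Lemma A_zero x : l2 x -> A op_zero x = vzero.
Proof.
  intros Hx. replace op_zero with (op_scal (RtoC 0) op_zero) at 1.
  - rewrite A_scal; auto; [|apply HS_zero]. apply functional_extensionality; intros; unfold vscal, vzero; ceq.
  - apply functional_extensionality; intros y. apply functional_extensionality; intros k.
    unfold op_scal, op_zero, vscal, vzero; ceq.
Qed.
Lemma A_sub X Y x : HS X -> HS Y -> l2 x -> A (op_sub X Y) x = vsub (A X x) (A Y x).
Proof.
  intros HX HY Hx. rewrite op_sub_eq. rewrite A_add; auto. 2: apply HS_scal; auto.
  rewrite A_scal; auto. apply functional_extensionality; intros; unfold vadd, vsub, vscal; ceq.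
Qed.
Lemma A_osum K F x : (forall k, (k < K)%nat -> HS (F k)) -> l2 x -> A (osum K F) x = vsum K (fun k => A (F k) x).
Proof.
  intros HF Hx. induction K; simpl.
  - apply A_zero; auto.
  - change (osum (S K) F) with (op_add (osum K F) (F K)). rewrite A_add; auto.
    rewrite IHK; auto. apply HS_osum; auto.
Qed.

Lemma A_cont M X Z x p : (forall X, HS X -> hs_nsq (A X) <= M * hs_nsq X) -> 0 <= M ->
  HS X -> HS Z -> l2 x ->
  sq (Cminus (A X x p) (A Z x p)) <= 4 * nsq x * (M * hs_nsq (op_sub X Z)).
Proof.
  intros HM HM0 HX HZ Hx.
  destruct (HS_sub X Z HX HZ) as [Hs _].
  replace (Cminus (A X x p) (A Z x p)) with (A (op_sub X Z) x p) by (rewrite A_sub; auto).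
  pose proof (A_HS _ Hs) as HAs.
  eapply Rle_trans; [apply (comp_bound _ x p (HS_Hb _ HAs) (HS_ex _ HAs) Hx)|].
  pose proof (nsq_nonneg x Hx). specialize (HM _ Hs). fold (hs_nsq (A (op_sub X Z))).
  nra.
Qed.

Lemma A_selfadj : is_nonneg HS ip2 A -> forall X Y, HS X -> HS Y ->
  ip2 X (A Y) = Cconj (ip2 Y (A X)).
Proof.
  intros Hpos X Y HX HY.
  pose proof (A_HS _ HX) as AX. pose proof (A_HS _ HY) as AY.
  destruct (HS_add X Y HX HY) as [HXY _].
  destruct (HS_scal (0,1) Y HY) as [HiY _].
  destruct (HS_add X _ HX HiY) as [HXiY _].
  pose proof (A_HS _ HiY) as AiY.
  destruct (Hpos _ HXY) as [I1 _]. destruct (Hpos _ HXiY) as [I2 _].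
  destruct (Hpos _ HX) as [I3 _]. destruct (Hpos _ HY) as [I4 _].
  rewrite (ip2_ext_r _ _ (op_add (A X) (A Y))) in I1 by (intros; apply A_add; auto; apply l2_e).
  rewrite (ip2_ext_r _ _ (op_add (A X) (op_scal (0,1) (A Y)))) in I2.
  2: { intros. rewrite A_add, A_scal; auto; apply l2_e. }
  rewrite ip2_add_l, !ip2_add_r in I1 by (auto; apply HS_add; auto).
  rewrite ip2_add_l, !ip2_add_r, !ip2_scal_l, !ip2_scal_r in I2 by (auto; try apply HS_add; try apply HS_scal; auto).
  revert I1 I2 I3 I4.
  destruct (ip2 X (A X)) as [a1 a2], (ip2 X (A Y)) as [b1 b2], (ip2 Y (A X)) as [c1 c2], (ip2 Y (A Y)) as [d1 d2].
  unfold Cconj; simpl. intros. f_equal; lra.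
Qed.
End AFacts.


Definition G (m : nat) (c : nat -> C) (J : nat) : op := osum J (fun j => op_scal (c j) (E m j)).

Lemma HS_G m c J : HS (G m c J).
Proof. apply HS_osum. intros; apply HS_scal, HS_E. Qed.

Lemma G_app m c J f : G m c J f = vscal (csum J (fun j => Cmult (c j) (f j))) (e m).
Proof.
  apply functional_extensionality; intros i. unfold G, osum. rewrite vsum_comp.
  unfold op_scal, E, vscal. induction J; simpl. ceq. rewrite IHJ. ceq.
Qed.

Lemma G_e m c J k : G m c J (e k) = vscal (if (k <? J)%nat then c k else RtoC 0) (e m).
Proof.
  rewrite G_app. f_equal. rewrite (csum_single _ _ k).
  - unfold e. rewrite Nat.eqb_refl. destruct (k <? J)%nat; ceq.
  - intros j Hj. unfold e. rewrite (proj2 (Nat.eqb_neq j k)) by auto. ceq.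
Qed.

Lemma hs_G_sub m c J Z : (forall k, Z (e k) = vscal (c k) (e m)) ->
  hs_nsq (op_sub (G m c J) Z) = Series (rtail J (fun k => sq (c k))).
Proof.
  intros HZ. unfold hs_nsq. apply Series_ext. intros k. unfold op_sub. rewrite G_e, HZ.
  replace (vsub (vscal (if (k <? J)%nat then c k else RtoC 0) (e m)) (vscal (c k) (e m)))
    with (vscal (if (k <? J)%nat then RtoC 0 else Copp (c k)) (e m)).
  - rewrite nsq_vscal, nsq_e, Rmult_1_r. unfold rtail. destruct (k <? J)%nat; unfold sq; simpl; ring.
  - apply functional_extensionality; intros i; unfold vsub, vscal. destruct (k <? J)%nat; ceq.
Qed.

Lemma Hb_id : Hbounded (fun x => x).
Proof. apply Hb_intro; auto. exists 1. intros; lra. Qed.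

Lemma ip_vzero_r u : ip u vzero = RtoC 0.
Proof.
  unfold ip. apply injective_projections; cbn [fst snd];
  (rewrite (Series_ext _ (fun _ => 0)); [apply (Series_single (fun _ => 0) 0); auto|intros; unfold vzero; simpl; ring]).
Qed.

Lemma ip_vsum_r u K f : l2 u -> (forall k, (k < K)%nat -> l2 (f k)) -> ip u (vsum K f) = csum K (fun k => ip u (f k)).
Proof.
  intros Hu. induction K; intros Hf; simpl. apply ip_vzero_r.
  rewrite ip_add_r; auto. rewrite IHK; auto. apply l2_vsum; auto.
Qed.

Lemma Clim_conj s l : Clim s l -> Clim (fun n => Cconj (s n)) (Cconj l).
Proof.
  intros H eps Heps. destruct (H eps Heps) as [N HN]. exists N. intros n Hn.
  replace (Cminus (Cconj (s n)) (Cconj l)) with (Cconj (Cminus (s n) l)) by (unfold Cconj, Cminus, Cplus, Copp; simpl; f_equal; ring).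
  rewrite sq_conj. auto.
Qed.

Lemma ip_T_trunc T u x : Hbounded T -> l2 u -> l2 x -> Clim (fun K => ip u (T (vtrunc K x))) (ip u (T x)).
Proof.
  intros HT Hu Hx. destruct (Hb_bound T HT) as [M [HM0 HM]].
  pose proof (nsq_nonneg u Hu).
  apply (Clim_bound _ _ (fun K => 2 * (nsq u * (M * nsq (vtail K x)))) O).
  - intros K _. rewrite (vtrunc_tail K x) at 2. rewrite Hb_add; auto.
    2: apply l2_vtrunc. 2: apply l2_vtail; auto.
    rewrite ip_add_r; try apply Hb_l2; auto; try apply l2_vtrunc; try apply l2_vtail; auto.
    replace (Cminus (ip u (T (vtrunc K x))) (Cplus (ip u (T (vtrunc K x))) (ip u (T (vtail K x)))))
      with (Cmult (RtoC (-1)) (ip u (T (vtail K x)))) by ceq.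
    rewrite sq_mult. replace (sq (RtoC (-1))) with 1 by (unfold sq; simpl; ring).
    rewrite Rmult_1_l. eapply Rle_trans; [apply ip_CS; auto; apply Hb_l2; auto; apply l2_vtail; auto|].
    apply Rmult_le_compat_l; [lra|]. apply Rmult_le_compat_l; auto. apply HM. apply l2_vtail; auto.
  - intros eps Heps. destruct (vtail_small x Hx (eps / (2 * (nsq u + 1) * (M + 1)))) as [N HN].
    { apply Rdiv_lt_0_compat; [lra|]. apply Rmult_lt_0_compat; lra. }
    exists N. intros K HK. specialize (HN K HK).
    pose proof (nsq_nonneg _ (l2_vtail K x Hx)).
    apply Rle_lt_trans with ((2 * (nsq u + 1) * (M + 1)) * nsq (vtail K x)).
    + assert (nsq u * M <= (nsq u + 1) * (M + 1)) by nra. nra.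
    + replace eps with ((2 * (nsq u + 1) * (M + 1)) * (eps / (2 * (nsq u + 1) * (M + 1)))) by (field; split; intro; lra).
      apply Rmult_lt_compat_l; [|lra]. apply Rmult_lt_0_compat; lra.
Qed.



Lemma Clim_ext s t l : (forall n, s n = t n) -> Clim s l -> Clim t l.
Proof. intros E H eps Heps. destruct (H eps Heps) as [N HN]. exists N. intros n Hn. rewrite <- E. auto. Qed.

Lemma ip_trunc_T T u x : Hbounded T -> l2 u -> l2 x -> Clim (fun K => ip (T (vtrunc K x)) u) (ip (T x) u).
Proof.
  intros HT Hu Hx. rewrite ip_conj.
  eapply Clim_ext; [|apply Clim_conj, ip_T_trunc; eauto]. intros; simpl. rewrite <- ip_conj. auto.
Qed.

Lemma ip_trunc_expand T u K x : Hbounded T -> l2 u ->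
  ip u (T (vtrunc K x)) = csum K (fun k => Cmult (x k) (ip u (T (e k)))).
Proof.
  intros HT Hu. rewrite vtrunc_vsum, Hb_vsum; auto. 2: intros; apply l2_vscal, l2_e.
  rewrite ip_vsum_r; auto. 2: intros; apply Hb_l2; auto; apply l2_vscal, l2_e.
  apply csum_ext. intros k _. rewrite Hb_scal; auto. 2: apply l2_e. apply ip_scal_r; auto. apply Hb_l2, l2_e; auto.
Qed.

Lemma csum_conj K f : Cconj (csum K f) = csum K (fun k => Cconj (f k)).
Proof. induction K; simpl. unfold Cconj; apply injective_projections; simpl; ring. rewrite <- IHK. unfold Cconj; apply injective_projections; simpl; ring. Qed.

Lemma ip_trunc_expand_l T u K x : Hbounded T -> l2 u ->
  ip (T (vtrunc K x)) u = csum K (fun k => Cmult (Cconj (x k)) (ip (T (e k)) u)).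
Proof.
  intros HT Hu. rewrite ip_conj, ip_trunc_expand, csum_conj by auto.
  apply csum_ext. intros k _. rewrite (ip_conj u). destruct (x k), (ip (T (e k)) u); unfold Cconj; apply injective_projections; simpl; ring.
Qed.

Lemma basis_adj T S : Hbounded T -> Hbounded S ->
  (forall j k, ip (e j) (T (e k)) = ip (S (e j)) (e k)) ->
  forall x y, l2 x -> l2 y -> ip y (T x) = ip (S y) x.
Proof.
  intros HT HS Hjk.
  assert (Step1 : forall k y, l2 y -> ip y (T (e k)) = ip (S y) (e k)).
  { intros k y Hy.
    pose proof (ip_trunc_T (fun x => x) (T (e k)) y Hb_id (Hb_l2 _ HT _ (l2_e k)) Hy) as L1.
    pose proof (ip_trunc_T S (e k) y HS (l2_e k) Hy) as L2.
    apply (Clim_unique _ _ _ L1). eapply Clim_ext; [|exact L2]. intros J. cbv beta.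
    rewrite (ip_trunc_expand_l S), (ip_trunc_expand_l (fun x => x)); auto.
    2: apply Hb_id. 2: apply Hb_l2, l2_e; auto. 2: apply l2_e.
    apply csum_ext. intros j _. rewrite Hjk. auto. }
  intros x y Hx Hy.
  pose proof (ip_T_trunc T y x HT Hy Hx) as L1.
  pose proof (ip_T_trunc (fun x => x) (S y) x Hb_id (Hb_l2 _ HS _ Hy) Hx) as L2.
  apply (Clim_unique _ _ _ L1). eapply Clim_ext; [|exact L2]. intros K. cbv beta.
  rewrite (ip_trunc_expand (fun x => x)); auto. 2: apply Hb_id. 2: apply Hb_l2; auto.
  rewrite ip_trunc_expand; auto.
  apply csum_ext. intros k _. f_equal. symmetry. apply Step1; auto.
Qed.


Lemma hs_G m c J : hs_nsq (G m c J) = rsum J (fun k => sq (c k)).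
Proof.
  unfold hs_nsq. rewrite (Series_ext _ (rtrunc J (fun k => sq (c k)))).
  - rewrite <- rsum_rtrunc. apply rconv_Series, rconv_fin. intros k Hk. unfold rtrunc.
    rewrite (proj2 (Nat.ltb_ge k J)); auto.
  - intros k. rewrite G_e, nsq_vscal, nsq_e, Rmult_1_r. unfold rtrunc. destruct (k <? J)%nat; auto. apply sq_0.
Qed.

Definition alpha : C := (1/2, -(1/2)).
Definition beta : C := (1/2, 1/2).

Section Constr.
Variable A : op -> op.
Hypothesis HA : S2bounded A.
Hypothesis Hpos : is_nonneg HS ip2 A.

Definition b (n m : nat) : op := fun x => fun j => A (E m j) x n.
Definition a (n m : nat) : op := fun x => vadd (vscal alpha (b n m x)) (vscal beta (b m n x)).

Lemma A_G m c J x p : l2 x -> A (G m c J) x p = csum J (fun j => Cmult (c j) (A (E m j) x p)).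
Proof.
  intros Hx. unfold G. rewrite A_osum; auto. 2: intros; apply HS_scal, HS_E.
  rewrite vsum_comp. apply csum_ext. intros k _. rewrite A_scal; auto. apply HS_E.
Qed.

Lemma HbAE m j : Hbounded (A (E m j)).
Proof. apply HS_Hb, A_HS, HS_E; auto. Qed.

Lemma csum_conj_sq J v : csum J (fun j => Cmult (Cconj (v j)) (v j)) = RtoC (rsum J (fun j => sq (v j))).
Proof. induction J; simpl. auto. rewrite IHJ. unfold sq, RtoC. apply injective_projections; simpl; ring. Qed.

Lemma b_bound : exists Cb, 0 <= Cb /\ forall n m x, l2 x -> l2 (b n m x) /\ nsq (b n m x) <= Cb * nsq x.
Proof.
  destruct (A_bound A HA) as [M [HM0 HM]].
  exists (4 * M). split; [lra|]. intros n m x Hx.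
  set (v := b n m x).
  pose proof (nsq_nonneg x Hx) as Hx0.
  assert (HS_J : forall J, rsum J (fun j => sq (v j)) <= 4 * M * nsq x).
  { intros J. set (S := rsum J (fun j => sq (v j))).
    assert (HS0 : 0 <= S) by (apply rsum_nonneg; intros; apply sq_nonneg).
    set (c := fun j => Cconj (v j)).
    assert (E1 : A (G m c J) x n = RtoC S).
    { rewrite A_G; auto. unfold S. rewrite <- csum_conj_sq. apply csum_ext. intros; auto. }
    pose proof (A_HS A HA _ (HS_G m c J)) as HAG.
    pose proof (comp_bound _ x n (HS_Hb _ HAG) (HS_ex _ HAG) Hx) as B.
    fold (hs_nsq (A (G m c J))) in B. rewrite E1 in B.
    pose proof (HM _ (HS_G m c J)) as B2. rewrite hs_G in B2.
    replace (rsum J (fun k => sq (c k))) with S in B2.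
    2: { apply rsum_ext. intros; unfold c; rewrite sq_conj; auto. }
    replace (sq (RtoC S)) with (S * S) in B by (unfold sq; simpl; ring).
    assert (S * S <= 4 * M * nsq x * S).
    { assert (nsq x * hs_nsq (A (G m c J)) <= nsq x * (M * S)) by (apply Rmult_le_compat_l; auto).
      lra. }
    destruct (Req_dec S 0) as [Z|Z]; [rewrite Z; nra|].
    apply (Rmult_le_reg_r S); [lra|]. nra. }
  destruct (rconv_incr (fun j => sq (v j)) (4 * M * nsq x)) as [l [Hl Hlb]].
  - intros; apply sq_nonneg.
  - auto.
  - apply rconv_Series in Hl. destruct Hl as [Hl1 Hl2]. split.
    + apply l2_eq; auto.
    + rewrite nsq_eq. fold v. rewrite Hl2. lra.
Qed.

Lemma b_l2 n m x : l2 x -> l2 (b n m x).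
Proof. intros Hx. destruct b_bound as [Cb [_ H]]. apply H; auto. Qed.

Lemma Hb_b n m : Hbounded (b n m).
Proof.
  apply Hb_intro.
  - apply b_l2.
  - intros x y Hx Hy. apply functional_extensionality; intros j. unfold b.
    rewrite (Hb_add _ (HbAE m j)); auto.
  - intros c x Hx. apply functional_extensionality; intros j. unfold b.
    rewrite (Hb_scal _ (HbAE m j)); auto.
  - destruct b_bound as [Cb [_ H]]. exists Cb. intros x Hx. apply H; auto.
Qed.

Lemma b_rel n m j k : b n m (e k) j = Cconj (b m n (e j) k).
Proof.
  unfold b. rewrite <- (ip2_E (A (E m j))), <- (ip2_E (A (E n k))) by (apply A_HS, HS_E; auto).
  apply A_selfadj; auto; apply HS_E.
Qed.

Lemma Hb_a n m : Hbounded (a n m).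
Proof.
  pose proof (Hb_b n m) as B1. pose proof (Hb_b m n) as B2.
  apply Hb_intro; unfold a.
  - intros x Hx. apply l2_vadd; apply l2_vscal; apply Hb_l2; auto.
  - intros x y Hx Hy. rewrite (Hb_add (b n m)), (Hb_add (b m n)); auto.
    apply functional_extensionality; intros k; unfold vadd, vscal; ceq.
  - intros c x Hx. rewrite (Hb_scal (b n m)), (Hb_scal (b m n)); auto.
    apply functional_extensionality; intros k; unfold vadd, vscal; ceq.
  - destruct (Hb_bound _ B1) as [M1 [_ HM1]]. destruct (Hb_bound _ B2) as [M2 [_ HM2]].
    exists (2 * (sq alpha * M1) + 2 * (sq beta * M2)). intros x Hx.
    eapply Rle_trans; [apply l2_vadd; apply l2_vscal; apply Hb_l2; auto|].
    rewrite !nsq_vscal. specialize (HM1 x Hx). specialize (HM2 x Hx).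
    pose proof (sq_nonneg alpha). pose proof (sq_nonneg beta). nra.
Qed.

Lemma sa_a n m : selfadjointH (a n m).
Proof.
  split; [apply Hb_a|]. intros x y Hx Hy.
  apply basis_adj; try apply Hb_a; auto.
  intros j k. rewrite ip_e_l, ip_e_r. unfold a, vadd, vscal.
  rewrite (b_rel n m j k), (b_rel m n j k). 
  destruct (b m n (e j) k), (b n m (e j) k). unfold alpha, beta, Cconj.
  apply injective_projections; simpl; field.
Qed.

End Constr.


Lemma fin_unif (P : nat -> nat -> Prop) K :
  (forall k, (k < K)%nat -> exists N, forall n, (N <= n)%nat -> P k n) ->
  exists N, forall k, (k < K)%nat -> forall n, (N <= n)%nat -> P k n.
Proof.
  induction K; intros H.
  - exists O. intros; lia.
  - destruct IHK as [N1 HN1]. { intros; apply H; lia. }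
    destruct (H K ltac:(lia)) as [N2 HN2].
    exists (max N1 N2). intros k Hk n Hn. destruct (Nat.eq_dec k K) as [->|Hne].
    + apply HN2; lia.
    + apply HN1; lia.
Qed.

Lemma rsum_const K c : rsum K (fun _ => c) = INR K * c.
Proof. induction K. simpl; ring. change (rsum (S K) (fun _ => c)) with (rsum K (fun _ => c) + c). rewrite IHK, S_INR. ring. Qed.

Lemma nsq_vtail_le N v : l2 v -> nsq (vtail N v) <= nsq v.
Proof.
  intros H. rewrite !nsq_eq. apply l2_eq in H. apply ser_cmp; auto.
  intros k; split; [apply sq_nonneg|]. unfold vtail. destruct (k <? N)%nat; [|lra]. rewrite sq_0. apply sq_nonneg.
Qed.

Lemma tail2 X : HS X -> forall eps, 0 < eps -> exists N0, forall N, (N0 <= N)%nat ->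
  ex_series (fun k => nsq (vtail N (X (e k)))) /\ Series (fun k => nsq (vtail N (X (e k)))) < eps.
Proof.
  intros HX eps Heps.
  set (g := fun k => nsq (X (e k))).
  assert (Hl2 : forall k, l2 (X (e k))) by (intros; apply Hb_l2, l2_e; apply HS_Hb; auto).
  assert (Hg : forall k, 0 <= g k) by (intros; apply nsq_nonneg; auto).
  assert (Ex : ex_series g) by (apply HS_ex; auto).
  destruct (tail_small g Hg Ex (eps / 2) ltac:(lra)) as [K HK].
  specialize (HK K (le_n _)).
  destruct (fin_unif (fun k N => nsq (vtail N (X (e k))) < eps / (2 * (INR K + 1))) K) as [N0 HN0].
  { intros k _. apply vtail_small; auto. apply Rdiv_lt_0_compat; [lra|]. pose proof (pos_INR K). lra. }
  exists N0. intros N HN.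
  set (f := fun k => nsq (vtail N (X (e k)))).
  assert (Hfg : forall k, 0 <= f k <= g k).
  { intros k; split. apply nsq_nonneg, l2_vtail; auto. apply nsq_vtail_le; auto. }
  destruct (ser_cmp f g Hfg Ex) as [Ef _]. split; auto.
  destruct (Series_split K f Ef) as [Et Es]. rewrite Es.
  assert (R1 : rsum K f <= INR K * (eps / (2 * (INR K + 1)))).
  { rewrite <- rsum_const. apply rsum_le. intros k Hk. apply Rlt_le. apply HN0; auto. }
  assert (R2 : INR K * (eps / (2 * (INR K + 1))) < eps / 2).
  { pose proof (pos_INR K). apply (Rmult_lt_reg_r (2 * (INR K + 1))); [lra|].
    replace (INR K * (eps / (2 * (INR K + 1))) * (2 * (INR K + 1))) with (INR K * eps) by (field; intro; lra). nra. }
  assert (R3 : Series (rtail K f) <= Series (rtail K g)).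
  { destruct (Series_split K g Ex) as [Eg _]. apply ser_cmp; auto.
    intros k; unfold rtail; destruct (k <? K)%nat; [lra|]; apply Hfg. }
  lra.
Qed.

Section Main.
Variable A : op -> op.
Hypothesis HA : S2bounded A.
Hypothesis Hpos : is_nonneg HS ip2 A.

Definition Rm (m : nat) (eta : op) : op := PS (fun i => Nat.eqb i m) eta.
Definition Qn (N : nat) (eta : op) : op := PS (fun i => Nat.ltb i N) eta.

Lemma step1 eta x p m : HS eta -> l2 x -> eta (b A p m x) m = A (Rm m eta) x p.
Proof.
  intros He Hx.
  set (c := fun j => eta (e j) m).
  pose proof (HS_Hb _ He) as Be.
  assert (Hv : l2 (b A p m x)) by (apply b_l2; auto).
  assert (HR : HS (Rm m eta)) by (apply HS_PS; auto).
  assert (RE : forall k, Rm m eta (e k) = vscal (c k) (e m)).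
  { intros k. apply functional_extensionality; intros i. unfold Rm, PS, vscal, e, c.
    destruct (Nat.eqb_spec i m); [subst; change (fun k0 => if (k0 =? k)%nat then RtoC 1 else RtoC 0) with (e k); ceq|ceq]. }
  assert (Ec : ex_series (fun k => sq (c k))).
  { apply (ser_cmp (fun k => sq (c k)) (fun k => nsq (eta (e k)))); [|apply HS_ex; auto].
    intros k; split; [apply sq_nonneg|]. unfold c. apply comp_le_nsq, Hb_l2, l2_e; auto. }
  destruct (A_bound A HA) as [M [HM0 HM]].
  pose proof (Hb_expand _ _ m Be Hv) as L1.
  assert (L2 : Clim (fun J => eta (vtrunc J (b A p m x)) m) (A (Rm m eta) x p)).
  { apply (Clim_bound _ _ (fun J => 4 * nsq x * (M * Series (rtail J (fun k => sq (c k))))) O).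
    - intros J _. rewrite Hb_trunc_comp by auto.
      replace (csum J (fun k => Cmult (b A p m x k) (eta (e k) m))) with (A (G m c J) x p).
      + rewrite <- (hs_G_sub m c J (Rm m eta)) by auto. apply A_cont; auto. apply HS_G.
      + rewrite A_G; auto. apply csum_ext. intros k _. unfold b, c. ceq.
    - intros eps Heps. pose proof (nsq_nonneg x Hx).
      destruct (tail_small _ (fun k => sq_nonneg (c k)) Ec (eps / (4 * (nsq x + 1) * (M + 1)))) as [N HN].
      { apply Rdiv_lt_0_compat; [lra|]. apply Rmult_lt_0_compat; lra. }
      exists N. intros J HJ. specialize (HN J HJ).
      assert (0 <= Series (rtail J (fun k => sq (c k)))).
      { destruct (Series_split J _ Ec) as [E1 _]. apply Series_nonneg; auto. apply rtail_nonneg. intros; apply sq_nonneg. }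
      apply Rle_lt_trans with ((4 * (nsq x + 1) * (M + 1)) * Series (rtail J (fun k => sq (c k)))).
      + assert (nsq x * M <= (nsq x + 1) * (M + 1)) by nra. nra.
      + replace eps with ((4 * (nsq x + 1) * (M + 1)) * (eps / (4 * (nsq x + 1) * (M + 1)))) by (field; split; intro; lra).
        apply Rmult_lt_compat_l; [|lra]. apply Rmult_lt_0_compat; lra. }
  exact (Clim_unique _ _ _ L1 L2).
Qed.

Lemma csum_zero N : csum N (fun _ => RtoC 0) = RtoC 0.
Proof. induction N; simpl; auto. rewrite IHN. ceq. Qed.

Lemma dsum N p (f g : nat -> nat -> C) :
  csum N (fun n => csum N (fun m => Cplus (Cmult (e n p) (f n m)) (Cmult (g n m) (e m p)))) =
  if (p <? N)%nat then Cplus (csum N (fun m => f p m)) (csum N (fun n => g n p)) else RtoC 0.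
Proof.
  rewrite (csum_ext N _ (fun n => Cplus (Cmult (e n p) (csum N (fun m => f n m))) (if (p <? N)%nat then g n p else RtoC 0))).
  - rewrite csum_plus. rewrite (csum_single N (fun n => Cmult (e n p) (csum N (fun m => f n m))) p).
    + unfold e at 1. rewrite Nat.eqb_refl. destruct (p <? N)%nat.
      * f_equal; ceq.
      * rewrite csum_zero. ceq.
    + intros n Hn. unfold e. rewrite (proj2 (Nat.eqb_neq p n)) by auto. ceq.
  - intros n _. rewrite csum_plus, csum_scal. f_equal.
    rewrite (csum_single N _ p).
    + unfold e. rewrite Nat.eqb_refl. destruct (p <? N)%nat; ceq.
    + intros m Hm. unfold e. rewrite (proj2 (Nat.eqb_neq p m)) by auto. ceq.
Qed.

Lemma step2 eta N x : HS eta -> l2 x -> sq_partial (a A) eta N x = vtrunc N (A (Qn N eta) x).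
Proof.
  intros He Hx. pose proof (HS_Hb _ He) as Be.
  apply functional_extensionality; intros p. unfold sq_partial. rewrite vsum_comp.
  set (w := fun n m => eta (a A n m x)).
  rewrite (csum_ext N _ (fun n => csum N (fun m => Cplus (Cmult (e n p) (Cmult beta (w n m m))) (Cmult (Cmult alpha (w n m n)) (e m p))))).
  2: { intros n _. rewrite vsum_comp. apply csum_ext. intros m _.
       unfold epshat, eps, vadd, vscal. rewrite !ip_e_l. unfold beta, alpha, w. ceq. }
  rewrite dsum. unfold vtrunc. destruct (p <? N)%nat eqn:Hp; [|auto].
  rewrite <- csum_plus.
  rewrite (csum_ext N _ (fun m => A (Rm m eta) x p)).
  - unfold Qn. transitivity (A (osum N (fun m => Rm m eta)) x p).
    + rewrite A_osum; auto. rewrite vsum_comp; auto. intros; apply HS_PS; auto.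
    + f_equal. apply functional_extensionality; intros y. apply functional_extensionality; intros i.
      unfold osum, Rm, PS. rewrite vsum_comp. rewrite (csum_single N _ i).
      * rewrite Nat.eqb_refl. auto.
      * intros k Hk. rewrite (proj2 (Nat.eqb_neq i k)) by auto. auto.
  - intros m _. unfold w, a.
    assert (L1 : l2 (b A p m x)) by (apply b_l2; auto).
    assert (L2 : l2 (b A m p x)) by (apply b_l2; auto).
    rewrite !(Hb_add eta Be), !(Hb_scal eta Be); auto; try apply l2_vscal; auto.
    unfold vadd, vscal. rewrite <- step1 by auto.
    unfold alpha, beta.
    destruct (eta (b A p m x) m), (eta (b A m p x) m). ceq.
Qed.
End Main.


Lemma vsub_trunc N u v : l2 u -> l2 v -> nsq (vsub (vtrunc N u) v) <= 2 * nsq (vsub u v) + 2 * nsq (vtail N v).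
Proof.
  intros Hu Hv.
  replace (vsub (vtrunc N u) v) with (vadd (vtrunc N (vsub u v)) (vscal (RtoC (-1)) (vtail N v))).
  - destruct (l2_vadd (vtrunc N (vsub u v)) (vscal (RtoC (-1)) (vtail N v))) as [_ H].
    apply l2_vtrunc. apply l2_vscal, l2_vtail; auto.
    rewrite nsq_vscal in H. replace (sq (RtoC (-1))) with 1 in H by (unfold sq; simpl; ring).
    pose proof (nsq_vtrunc_le N (vsub u v) (proj1 (l2_vsub u v Hu Hv))). lra.
  - apply functional_extensionality; intros k. unfold vadd, vsub, vscal, vtrunc, vtail.
    destruct (k <? N)%nat; ceq.
Qed.

Section Final.
Variable A : op -> op.
Hypothesis HA : S2bounded A.
Hypothesis Hpos : is_nonneg HS ip2 A.

Lemma main_conv eta : HS eta -> forall eps, 0 < eps -> exists N0, forall N, (N0 <= N)%nat ->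
  hs_nsq (op_sub (sq_partial (a A) eta N) (A eta)) < eps.
Proof.
  intros He eps Heps.
  destruct (A_bound A HA) as [M [HM0 HM]].
  pose proof (A_HS A HA _ He) as HAe.
  destruct (tail2 eta He (eps / (4 * (M + 1)))) as [N1 HN1].
  { apply Rdiv_lt_0_compat; lra. }
  destruct (tail2 (A eta) HAe (eps / 4)) as [N2 HN2]. { lra. }
  exists (max N1 N2). intros N HN.
  destruct (HN1 N ltac:(lia)) as [E1 S1]. destruct (HN2 N ltac:(lia)) as [E2 S2].
  set (Q := Qn N eta).
  assert (HQ : HS Q) by (apply HS_PS; auto).
  destruct (HS_sub Q eta HQ He) as [HD _].
  set (D := op_sub Q eta).
  assert (HsD : hs_nsq D = Series (fun k => nsq (vtail N (eta (e k))))).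
  { unfold hs_nsq. apply Series_ext. intros k. unfold D, op_sub, Q, Qn, PS.
    replace (vsub (fun i => if (i <? N)%nat then eta (e k) i else RtoC 0) (eta (e k)))
      with (vscal (RtoC (-1)) (vtail N (eta (e k)))).
    - rewrite nsq_vscal. replace (sq (RtoC (-1))) with 1 by (unfold sq; simpl; ring). ring.
    - apply functional_extensionality; intros i. unfold vsub, vscal, vtail. destruct (i <? N)%nat; ceq. }
  pose proof (A_HS A HA _ HD) as HAD.
  assert (Hl2 : forall X k, HS X -> l2 (X (e k))) by (intros; apply Hb_l2, l2_e; apply HS_Hb; auto).
  assert (Tk : forall k, 0 <= nsq (op_sub (sq_partial (a A) eta N) (A eta) (e k)) <=
                 2 * nsq (A D (e k)) + 2 * nsq (vtail N (A eta (e k)))).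
  { intros k. change (op_sub (sq_partial (a A) eta N) (A eta) (e k)) with (vsub (sq_partial (a A) eta N (e k)) (A eta (e k))).
    rewrite step2; auto. 2: apply l2_e.
    split.
    - apply nsq_nonneg. apply (l2_vsub _ _ (l2_vtrunc _ _) (Hl2 _ k HAe)).
    - unfold D. rewrite (A_sub A HA Q eta (e k) HQ He (l2_e k)). apply vsub_trunc; apply Hl2; auto. apply A_HS; auto. }
  unfold D in *.
  destruct (exR_scal 2 _ (HS_ex _ HAD)) as [F1 G1].
  destruct (exR_scal 2 _ E2) as [F2 G2].
  destruct (exR_plus _ _ F1 F2) as [F3 G3].
  destruct (ser_cmp _ _ Tk F3) as [_ B].
  unfold hs_nsq at 1. eapply Rle_lt_trans; [exact B|].
  rewrite G3, G1, G2. fold (hs_nsq (A (op_sub Q eta))).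
  pose proof (HM _ HD) as B2. rewrite HsD in B2.
  assert (M * Series (fun k => nsq (vtail N (eta (e k)))) <= M * (eps / (4 * (M + 1)))) by (apply Rmult_le_compat_l; lra).
  assert (M * (eps / (4 * (M + 1))) <= eps / 4).
  { apply (Rmult_le_reg_r (4 * (M + 1))); [lra|].
    replace (M * (eps / (4 * (M + 1))) * (4 * (M + 1))) with (M * eps) by (field; intro; lra). nra. }
  lra.
Qed.

Lemma G_lim m c Z x p : HS Z -> (forall k, Z (e k) = vscal (c k) (e m)) -> ex_series (fun k => sq (c k)) -> l2 x ->
  Clim (fun J => A (G m c J) x p) (A Z x p).
Proof.
  intros HZ RE Ec Hx.
  destruct (A_bound A HA) as [M [HM0 HM]].
  apply (Clim_bound _ _ (fun J => 4 * nsq x * (M * Series (rtail J (fun k => sq (c k))))) O).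
  - intros J _. rewrite <- (hs_G_sub m c J Z) by auto. apply A_cont; auto. apply HS_G.
  - intros eps Heps. pose proof (nsq_nonneg x Hx).
    destruct (tail_small _ (fun k => sq_nonneg (c k)) Ec (eps / (4 * (nsq x + 1) * (M + 1)))) as [N HN].
    { apply Rdiv_lt_0_compat; [lra|]. apply Rmult_lt_0_compat; lra. }
    exists N. intros J HJ. specialize (HN J HJ).
    assert (0 <= Series (rtail J (fun k => sq (c k)))).
    { destruct (Series_split J _ Ec) as [E1 _]. apply Series_nonneg; auto. apply rtail_nonneg. intros; apply sq_nonneg. }
    apply Rle_lt_trans with ((4 * (nsq x + 1) * (M + 1)) * Series (rtail J (fun k => sq (c k)))).
    + assert (nsq x * M <= (nsq x + 1) * (M + 1)) by nra. nra.
    + replace eps with ((4 * (nsq x + 1) * (M + 1)) * (eps / (4 * (nsq x + 1) * (M + 1)))) by (field; split; intro; lra).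
      apply Rmult_lt_compat_l; [|lra]. apply Rmult_lt_0_compat; lra.
Qed.

Lemma Yop_e n y k : Yop n y (e k) = vscal (Cconj (y k)) (e n).
Proof. unfold Yop. rewrite ip_e_r. auto. Qed.

Lemma b_sa n x y : l2 x -> l2 y -> ip y (b A n n x) = ip (b A n n y) x.
Proof.
  apply basis_adj; try apply Hb_b; auto.
  intros j k. rewrite ip_e_l, ip_e_r. apply b_rel; auto.
Qed.

Lemma AY_comp n y k : l2 y -> A (Yop n y) (e k) n = ip y (b A n n (e k)).
Proof.
  intros Hy.
  set (c := fun j => Cconj (y j)).
  assert (Ec : ex_series (fun k => sq (c k))).
  { eapply ex_series_ext; [|apply (proj1 (l2_eq y)); exact Hy]. intros; unfold c; rewrite sq_conj; auto. }
  pose proof (G_lim n c (Yop n y) (e k) n (proj1 (HS_Y n y Hy)) (Yop_e n y) Ec (l2_e k)) as L1.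
  pose proof (ip_Clim y (b A n n (e k)) Hy (b_l2 A HA n n _ (l2_e k))) as L2.
  symmetry. apply (Clim_unique _ _ _ L2). eapply Clim_ext; [|exact L1]. intros J.
  cbv beta. rewrite (A_G A HA n c J (e k) n (l2_e k)). apply csum_ext. intros; unfold c, b; auto.
Qed.

Lemma a_diag n : a A n n = b A n n.
Proof.
  apply functional_extensionality; intros x. apply functional_extensionality; intros k.
  unfold a, vadd, vscal, alpha, beta. ceq.
Qed.

Lemma cser_conj f : cser (fun k => Cconj (f k)) = Cconj (cser f).
Proof. unfold cser, Cconj. cbn [fst snd]. f_equal. apply Series_opp. Qed.

Lemma ipY n y : l2 y -> ip y (a A n n y) = Cconj (ip2 (Yop n y) (A (Yop n y))).
Proof.
  intros Hy. rewrite a_diag. rewrite ip2_cser.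
  pose proof (HS_Y n y Hy) as [HY _].
  pose proof (A_HS A HA _ HY) as HAY.
  rewrite <- cser_conj.
  change (ip y (b A n n y)) with (cser (fun k => Cmult (Cconj (y k)) (b A n n y k))).
  apply cser_ext. intros k.
  rewrite Yop_e, ip_scal_l, ip_e_l, AY_comp, b_sa, ip_e_r; auto.
  - rewrite Cconj_conj. destruct (y k), (b A n n y k). unfold Cconj. apply injective_projections; simpl; ring.
  - apply l2_e.
  - apply Hb_l2, l2_e. apply HS_Hb; auto.
  - apply l2_e.
Qed.

Lemma a_nonneg n : is_nonneg l2 ip (a A n n).
Proof.
  intros y Hy. rewrite ipY by auto.
  destruct (Hpos _ (proj1 (HS_Y n y Hy))) as [I R].
  destruct (ip2 (Yop n y) (A (Yop n y))). unfold Cconj; simpl in *. split; lra.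
Qed.

Lemma a_positive n : is_positive HS op_eq op_zero ip2 A -> is_positive l2 veq vzero ip (a A n n).
Proof.
  intros [_ Hp]. split; [apply a_nonneg|]. intros y Hy Hne.
  rewrite ipY by auto.
  assert (HnY : ~ op_eq (Yop n y) op_zero).
  { intros Heq. apply Hne. intros k. specialize (Heq (e k) (l2_e k) n).
    rewrite Yop_e in Heq. unfold op_zero, vzero, vscal, e in Heq. rewrite Nat.eqb_refl in Heq.
    revert Heq. destruct (y k). unfold Cconj, vzero, RtoC. simpl. intros H. injection H. intros. 
    f_equal; lra. }
  specialize (Hp _ (proj1 (HS_Y n y Hy)) HnY).
  destruct (ip2 (Yop n y) (A (Yop n y))). unfold Cconj; simpl in *. lra.
Qed.

Lemma a_lower n m : (forall r, qf_vals HS hs_nsq ip2 A r -> m <= r) ->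
  forall r, qf_vals l2 nsq ip (a A n n) r -> m <= r.
Proof.
  intros Hm r [y [Hy [Hn Hr]]]. apply Hm.
  exists (Yop n y). split; [apply HS_Y; auto|]. split.
  - rewrite (proj2 (HS_Y n y Hy)). auto.
  - rewrite Hr, ipY by auto. destruct (ip2 (Yop n y) (A (Yop n y))). unfold Cconj; simpl; auto.
Qed.

Lemma a_glb mA : is_glb (qf_vals HS hs_nsq ip2 A) mA ->
  forall n ma, is_glb (qf_vals l2 nsq ip (a A n n)) ma -> mA <= ma.
Proof.
  intros [H1 _] n ma [_ H2]. apply H2. apply a_lower; auto.
Qed.

Lemma a_posdef n : posdef HS hs_nsq ip2 A -> posdef l2 nsq ip (a A n n).
Proof.
  intros [m [[H1 _] Hm]].
  set (E' := fun r => qf_vals l2 nsq ip (a A n n) (- r)).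
  assert (Hb : bound E').
  { exists (- m). intros r Hr. unfold E' in Hr. apply (a_lower n m H1) in Hr. lra. }
  assert (Hne : exists r, E' r).
  { exists (- Re (ip (e O) (a A n n (e O)))). unfold E'. exists (e O). split; [apply l2_e|].
    split; [apply nsq_e|]. ring. }
  destruct (completeness E' Hb Hne) as [L [HL1 HL2]].
  exists (- L). split.
  - split.
    + intros r Hr. assert (E' (- r)) by (unfold E'; rewrite Ropp_involutive; auto).
      specialize (HL1 _ H). lra.
    + intros m' Hm'. assert (L <= - m').
      { apply HL2. intros r Hr. specialize (Hm' _ Hr). lra. }
      lra.
  - assert (L <= - m).
    { apply HL2. intros r Hr. apply (a_lower n m H1) in Hr. lra. }
    lra.
Qed.
End Final.

Theorem proposition3p14 (A : op -> op) :
  S2bounded A -> is_nonneg HS ip2 A ->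
  exists a : nat -> nat -> op,
    (forall n m, selfadjointH (a n m)) /\
    (forall eta, HS eta ->
       forall eps0, 0 < eps0 -> exists N0, forall N, (N0 <= N)%nat ->
         hs_nsq (op_sub (sq_partial a eta N) (A eta)) < eps0) /\
    (forall n, is_nonneg l2 ip (a n n)) /\
    (is_positive HS op_eq op_zero ip2 A -> forall n, is_positive l2 veq vzero ip (a n n)) /\
    (posdef HS hs_nsq ip2 A -> forall n, posdef l2 nsq ip (a n n)) /\
    (forall mA, is_glb (qf_vals HS hs_nsq ip2 A) mA ->
       forall n ma, is_glb (qf_vals l2 nsq ip (a n n)) ma -> mA <= ma).
Proof.
  intros HA Hpos. exists (a A).
  split; [intros; apply sa_a; auto|].
  split; [intros; apply main_conv; auto|].
  split; [intros; apply a_nonneg; auto|].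
  split; [intros; apply a_positive; auto|].
  split; [intros; apply a_posdef; auto|].
  intros; eapply a_glb; eauto.
Qed.
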